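(* Assume in addition that $f:C(\Omega)\to C(\Omega)$ is continuously (Fréchet) differentiable. Then $D(\widehat\tau)$ is an open subset of $BUC_\alpha\times C(\Omega)$ and the map $\widehat\tau:D(\widehat\tau)\to C(\Omega)$ is continuously differentiable.
   Context: $\Omega\subset\mathbb R^n$ compact, $C(\Omega)$ with sup norm, $\alpha\ge0$ fixed. $f:C(\Omega)\to C(\Omega)$ is Lipschitz, $0<f(\phi)(x)\le M_f$ for a constant $M_f$, and non-increasing for the pointwise order. $BUC_\alpha$ is the Banach space of $\phi\in C((-\infty,0],C(\Omega))$ with $t\mapsto e^{-\alpha|t|}\phi(t,\cdot)$ bounded and uniformly continuous, norm $\sup_{t\le0}e^{-\alpha|t|}\|\phi(t,\cdot)\|_\infty$. For $\phi\in BUC_\alpha$, $\overline\phi(s)=\phi(s)$ for $s\le0$, $\overline\phi(s)=\phi(0)$ for $s\ge0$. $D(\widehat\tau)=\{(\phi,\delta)\in BUC_\alpha\times C(\Omega):\delta(x)<\int_{-\infty}^0f(\phi(s,\cdot))(x)ds$ whenever $\delta(x)>0\}$, and for $(\phi,\delta)\in D(\widehat\tau)$, $\widehat\tau(\phi,\delta)\in C(\Omega)$ is the unique function with $\int_{-\widehat\tau(\phi,\delta)(x)}^0f(\overline\phi(s,\cdot))(x)ds=\delta(x)$ for all $x\in\Omega$. *)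

(* Defs.v *)
From Stdlib Require Import Reals ClassicalEpsilon.
From Stdlib Require Vectors.Fin.
Open Scope R_scope.

Definition pt (n : nat) : Type := Fin.t n -> R.

Definition near {n : nat} (x y : pt n) (d : R) : Prop :=
  forall i : Fin.t n, Rabs (x i - y i) < d.

Definition compact_set {n : nat} (Om : pt n -> Prop) : Prop :=
  forall u : nat -> pt n, (forall k, Om (u k)) ->
  exists (sub : nat -> nat) (x : pt n),
    (forall k, (sub k < sub (S k))%nat) /\ Om x /\
    forall eps, 0 < eps -> exists N : nat, forall k, (N <= k)%nat ->
      near (u (sub k)) x eps.

(** g is continuous on Omega, i.e. (its restriction) belongs to C(Omega). *)
Definition contC {n : nat} (Om : pt n -> Prop) (g : pt n -> R) : Prop :=
  forall x, Om x -> forall eps, 0 < eps -> exists d, 0 < d /\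
    forall y, Om y -> near x y d -> Rabs (g x - g y) < eps.

Definition supC_le {n : nat} (Om : pt n -> Prop) (g : pt n -> R) (c : R) : Prop :=
  forall x, Om x -> Rabs (g x) <= c.

Definition supBUC_le {n : nat} (Om : pt n -> Prop) (alpha : R)
  (phi : R -> pt n -> R) (c : R) : Prop :=
  forall t x, t <= 0 -> Om x -> exp (- alpha * Rabs t) * Rabs (phi t x) <= c.

(** phi belongs to BUC_alpha (only values at t <= 0 are relevant). *)
Definition BUC {n : nat} (Om : pt n -> Prop) (alpha : R) (phi : R -> pt n -> R) : Prop :=
  (forall t, t <= 0 -> contC Om (phi t)) /\
  (exists c, supBUC_le Om alpha phi c) /\
  (forall eps, 0 < eps -> exists d, 0 < d /\
     forall s t, s <= 0 -> t <= 0 -> Rabs (s - t) < d ->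
     forall x, Om x ->
       Rabs (exp (- alpha * Rabs s) * phi s x - exp (- alpha * Rabs t) * phi t x) <= eps).

Definition phibar {n : nat} (phi : R -> pt n -> R) (s : R) : pt n -> R :=
  if Rle_dec s 0 then phi s else phi 0.

(** Riemann integral (oriented) of g from a to b; 0 if not integrable
    (only used for continuous integrands, where it is the usual integral). *)
Definition Rint (g : R -> R) (a b : R) : R :=
  match excluded_middle_informative (inhabited (Riemann_integrable g a b)) with
  | left H => RiemannInt (epsilon H (fun _ => True))
  | right _ => 0
  end.

Definition prodX (n : nat) : Type := ((R -> pt n -> R) * (pt n -> R))%type.

Definition memP {n : nat} (Om : pt n -> Prop) (alpha : R) (p : prodX n) : Prop :=
  BUC Om alpha (fst p) /\ contC Om (snd p).

(** product norm (max of the two norms) <= c *)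
Definition normP_le {n : nat} (Om : pt n -> Prop) (alpha : R) (p : prodX n) (c : R) : Prop :=
  supBUC_le Om alpha (fst p) c /\ supC_le Om (snd p) c.

Definition addP {n : nat} (p q : prodX n) : prodX n :=
  (fun t y => fst p t y + fst q t y, fun y => snd p y + snd q y).

Definition scalP {n : nat} (a : R) (p : prodX n) : prodX n :=
  (fun t y => a * fst p t y, fun y => a * snd p y).

Definition addF {n : nat} (g h : pt n -> R) : pt n -> R := fun y => g y + h y.
Definition scalF {n : nat} (a : R) (g : pt n -> R) : pt n -> R := fun y => a * g y.

Definition Dtau {n : nat} (Om : pt n -> Prop) (alpha : R)
  (f : (pt n -> R) -> (pt n -> R)) (p : prodX n) : Prop :=
  memP Om alpha p /\
  forall x, Om x -> 0 < snd p x ->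
    exists T, 0 <= T /\ snd p x < Rint (fun s => f (fst p s) x) (- T) 0.

Definition tauhat {n : nat} (f : (pt n -> R) -> (pt n -> R)) (p : prodX n) : pt n -> R :=
  fun x => epsilon (inhabits 0)
    (fun tau => Rint (fun s => f (phibar (fst p) s) x) (- tau) 0 = snd p x).

Definition lipschitzC {n : nat} (Om : pt n -> Prop) (f : (pt n -> R) -> (pt n -> R)) : Prop :=
  exists L, forall g h, contC Om g -> contC Om h -> forall c,
    supC_le Om (fun y => g y - h y) c -> supC_le Om (fun y => f g y - f h y) (L * c).

(** X is given by a membership
    predicate memX, a norm bound predicate nX (nX h c <-> ||h|| <= c),
    addition and scalar multiplication. *)
Definition C1_map {n : nat} (Om : pt n -> Prop) {X : Type}
  (memX : X -> Prop) (nX : X -> R -> Prop) (addX : X -> X -> X) (scalX : R -> X -> X)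
  (D : X -> Prop) (F : X -> pt n -> R) (DF : X -> X -> pt n -> R) : Prop :=
  (forall p, D p -> contC Om (F p)) /\
  (forall p, D p -> forall h, memX h -> contC Om (DF p h)) /\
  (forall p, D p -> forall h1 h2 a b, memX h1 -> memX h2 -> forall x, Om x ->
     DF p (addX (scalX a h1) (scalX b h2)) x = a * DF p h1 x + b * DF p h2 x) /\
  (forall p, D p -> exists K, forall h c, memX h -> nX h c ->
     supC_le Om (DF p h) (K * c)) /\
  (forall p, D p -> forall eps, 0 < eps -> exists d, 0 < d /\
     forall h c, memX h -> D (addX p h) -> nX h c -> c < d ->
       supC_le Om (fun x => F (addX p h) x - F p x - DF p h x) (eps * c)) /\
  (forall p, D p -> forall eps, 0 < eps -> exists d, 0 < d /\
     forall q, D q -> (exists c, c < d /\ nX (addX q (scalX (-1) p)) c) ->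
     forall h c, memX h -> nX h c ->
       supC_le Om (fun x => DF q h x - DF p h x) (eps * c)).

(* Main.v *)
Require Import Defs.
From Stdlib Require Import Reals Lra Lia ZArith ClassicalEpsilon FunctionalExtensionality Classical.
From Stdlib Require Import Rtopology.
From Coquelicot Require Import Coquelicot.
Open Scope R_scope.

Lemma Rint_RInt g a b : ex_RInt g a b -> Rint g a b = RInt g a b.
Proof.
  intro H. unfold Rint. destruct (excluded_middle_informative _) as [Hi|Hn].
  - symmetry. apply RInt_Reals.
  - exfalso; apply Hn; constructor; now apply ex_RInt_Reals_0.
Qed.

Lemma RI_chasles (f : R -> R) a b c : ex_RInt f a b -> ex_RInt f b c ->
  RInt f a b + RInt f b c = RInt f a c.
Proof. intros; rewrite <- (RInt_Chasles f a b c) by auto; reflexivity. Qed.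

Lemma RI_swap (f : R -> R) a b : ex_RInt f a b -> RInt f b a = - RInt f a b.
Proof. intros H. rewrite <- (opp_RInt_swap f a b H). reflexivity. Qed.

Lemma RI_abs (f : R -> R) a b M : ex_RInt f a b ->
  (forall t, Rmin a b <= t <= Rmax a b -> Rabs (f t) <= M) ->
  Rabs (RInt f a b) <= Rabs (b - a) * M.
Proof.
  intros H Hb. destruct (Rle_dec a b) as [l|l].
  - rewrite (Rabs_right (b - a)) by lra. apply abs_RInt_le_const; auto.
    intros t Ht; apply Hb. rewrite Rmin_left, Rmax_right; lra.
  - rewrite (RI_swap f b a) by (now apply ex_RInt_swap).
    rewrite Rabs_Ropp.
    replace (Rabs (b - a)) with (a - b) by (rewrite Rabs_left by lra; ring).
    apply abs_RInt_le_const; try lra.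
    + now apply ex_RInt_swap.
    + intros t Ht; apply Hb. rewrite Rmin_right, Rmax_left; lra.
Qed.

Lemma RI_ge (f : R -> R) a b m : a <= b -> ex_RInt f a b ->
  (forall t, a <= t <= b -> m <= f t) -> (b - a) * m <= RInt f a b.
Proof.
  intros ab H Hm.
  assert (E : RInt (fun _ => m) a b = (b - a) * m).
  { rewrite RInt_const. reflexivity. }
  rewrite <- E. apply RInt_le; auto.
  - apply ex_RInt_const.
  - intros; apply Hm; lra.
Qed.

Lemma RI_lin (f g : R -> R) a b u v : ex_RInt f a b -> ex_RInt g a b ->
  RInt (fun s => u * f s + v * g s) a b = u * RInt f a b + v * RInt g a b.
Proof.
  intros Hf Hg.
  assert (E1: RInt (fun s => u * f s) a b = u * RInt f a b) by exact (RInt_scal f a b u Hf).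
  assert (E2: RInt (fun s => v * g s) a b = v * RInt g a b) by exact (RInt_scal g a b v Hg).
  assert (X1: ex_RInt (fun s => u * f s) a b) by exact (ex_RInt_scal f a b u Hf).
  assert (X2: ex_RInt (fun s => v * g s) a b) by exact (ex_RInt_scal g a b v Hg).
  rewrite <- E1, <- E2. exact (RInt_plus _ _ a b X1 X2).
Qed.

Lemma RI_minus (f g : R -> R) a b : ex_RInt f a b -> ex_RInt g a b ->
  RInt (fun s => f s - g s) a b = RInt f a b - RInt g a b.
Proof.
  intros Hf Hg. exact (RInt_minus f g a b Hf Hg).
Qed.

Lemma exRI_minus (f g : R -> R) a b : ex_RInt f a b -> ex_RInt g a b ->
  ex_RInt (fun s => f s - g s) a b.
Proof. intros Hf Hg. apply (ex_RInt_minus f g a b Hf Hg). Qed.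

Lemma cont_eps (f : R -> R) z :
  (forall eps, 0 < eps -> exists d, 0 < d /\ forall t, Rabs (t - z) < d -> Rabs (f t - f z) <= eps) ->
  continuity_pt f z.
Proof.
  intros H eps Heps. destruct (H (eps/2)) as [d [Hd Ht]]; [lra|].
  exists d; split; auto. intros t [_ Hx]. simpl in *. unfold R_dist in *.
  specialize (Ht t Hx). lra.
Qed.

Lemma exRI_cont (f : R -> R) a b : (forall z, continuity_pt f z) -> ex_RInt f a b.
Proof.
  intros H. apply (@ex_RInt_continuous R_CompleteNormedModule). intros z _.
  apply continuity_pt_filterlim. apply H.
Qed.

Lemma near_sym {n} (x y : pt n) d : near x y d -> near y x d.
Proof. intros H i. rewrite Rabs_minus_sym. apply H. Qed.

Lemma near_refl {n} (x : pt n) d : 0 < d -> near x x d.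
Proof. intros H i. rewrite Rminus_diag, Rabs_R0. auto. Qed.

Lemma near_mono {n} (x y : pt n) d d' : near x y d -> d <= d' -> near x y d'.
Proof. intros H Hd i. specialize (H i). lra. Qed.

Lemma contC_const {n} (Om : pt n -> Prop) c : contC Om (fun _ => c).
Proof. intros x _ eps He. exists 1; split; [lra|]. intros. rewrite Rminus_diag, Rabs_R0; lra. Qed.

Lemma contC_lin {n} (Om : pt n -> Prop) g h a b : contC Om g -> contC Om h ->
  contC Om (fun y => a * g y + b * h y).
Proof.
  intros Hg Hh x Hx eps He.
  destruct (Hg x Hx (eps / (2 * (Rabs a + 1)))) as [d1 [Hd1 H1]].
  { apply Rdiv_lt_0_compat; [lra|]. pose proof (Rabs_pos a); lra. }
  destruct (Hh x Hx (eps / (2 * (Rabs b + 1)))) as [d2 [Hd2 H2]].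
  { apply Rdiv_lt_0_compat; [lra|]. pose proof (Rabs_pos b); lra. }
  exists (Rmin d1 d2); split; [now apply Rmin_glb_lt|].
  intros y Hy Hn.
  assert (N1 : near x y d1) by (apply (near_mono _ _ _ _ Hn); apply Rmin_l).
  assert (N2 : near x y d2) by (apply (near_mono _ _ _ _ Hn); apply Rmin_r).
  specialize (H1 y Hy N1). specialize (H2 y Hy N2).
  replace (a * g x + b * h x - (a * g y + b * h y)) with (a * (g x - g y) + b * (h x - h y)) by ring.
  eapply Rle_lt_trans; [apply Rabs_triang|]. rewrite !Rabs_mult.
  pose proof (Rabs_pos a). pose proof (Rabs_pos b).
  assert (A1 : Rabs a * Rabs (g x - g y) <= Rabs a * (eps / (2 * (Rabs a + 1)))).
  { apply Rmult_le_compat_l; lra. }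
  assert (A2 : Rabs b * Rabs (h x - h y) <= Rabs b * (eps / (2 * (Rabs b + 1)))).
  { apply Rmult_le_compat_l; lra. }
  assert (B1 : Rabs a * (eps / (2 * (Rabs a + 1))) < eps / 2).
  { replace (Rabs a * (eps / (2 * (Rabs a + 1)))) with (eps / 2 - eps / (2 * (Rabs a + 1))) by (field; lra).
    assert (0 < eps / (2 * (Rabs a + 1))) by (apply Rdiv_lt_0_compat; lra). lra. }
  assert (B2 : Rabs b * (eps / (2 * (Rabs b + 1))) < eps / 2).
  { replace (Rabs b * (eps / (2 * (Rabs b + 1)))) with (eps / 2 - eps / (2 * (Rabs b + 1))) by (field; lra).
    assert (0 < eps / (2 * (Rabs b + 1))) by (apply Rdiv_lt_0_compat; lra). lra. }
  lra.
Qed.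

Lemma contC_ext {n} (Om : pt n -> Prop) g h : contC Om g -> (forall x, Om x -> g x = h x) -> contC Om h.
Proof.
  intros Hg E x Hx eps He. destruct (Hg x Hx eps He) as [d [Hd H]]. exists d; split; auto.
  intros y Hy N. rewrite <- !E by auto. auto.
Qed.

Lemma contC_plus {n} (Om : pt n -> Prop) g h : contC Om g -> contC Om h -> contC Om (fun y => g y + h y).
Proof. intros. apply (contC_ext _ (fun y => 1 * g y + 1 * h y)); [now apply contC_lin|]. intros; ring. Qed.

Lemma contC_minus {n} (Om : pt n -> Prop) g h : contC Om g -> contC Om h -> contC Om (fun y => g y - h y).
Proof. intros. apply (contC_ext _ (fun y => 1 * g y + (-1) * h y)); [now apply contC_lin|]. intros; ring. Qed.

Lemma contC_scal {n} (Om : pt n -> Prop) a g : contC Om g -> contC Om (fun y => a * g y).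
Proof. intros. apply (contC_ext _ (fun y => a * g y + 0 * g y)); [now apply contC_lin|]. intros; ring. Qed.

Lemma om_cluster {n} (Om : pt n -> Prop) : compact_set Om ->
  forall P : nat -> pt n -> Prop, (forall N, exists x, Om x /\ P N x) ->
  exists xs, Om xs /\ forall eps, 0 < eps -> forall N0, exists N x, (N0 <= N)%nat /\ Om x /\ P N x /\ near xs x eps.
Proof.
  intros HC P HP.
  set (u := fun N => epsilon (inhabits (fun _ : Fin.t n => 0)) (fun x => Om x /\ P N x)).
  assert (Hu : forall N, Om (u N) /\ P N (u N)).
  { intro N. unfold u. apply epsilon_spec. apply HP. }
  destruct (HC u (fun N => proj1 (Hu N))) as [sub [xs [Hs [Hx Hc]]]].
  exists xs; split; auto. intros eps He N0.
  destruct (Hc eps He) as [N1 HN1].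
  assert (Hge : forall k, (k <= sub k)%nat).
  { induction k; [lia|]. specialize (Hs k). lia. }
  exists (sub (Nat.max N0 N1)), (u (sub (Nat.max N0 N1))). split; [|split;[|split]].
  - specialize (Hge (Nat.max N0 N1)). lia.
  - apply Hu.
  - apply Hu.
  - apply near_sym. apply HN1. lia.
Qed.

Lemma INR_big (r : R) : exists N : nat, r < INR N.
Proof.
  destruct (archimed r) as [H _]. destruct (Rle_dec r 0).
  - exists 1%nat. simpl; lra.
  - assert (0 < IZR (up r)) by lra. apply lt_0_IZR in H0.
    exists (Z.to_nat (up r)). rewrite INR_IZR_INZ. rewrite Z2Nat.id by lia. auto.
Qed.

Lemma contC_bounded {n} (Om : pt n -> Prop) g : compact_set Om -> contC Om g ->
  exists B, 0 <= B /\ forall x, Om x -> Rabs (g x) <= B.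
Proof.
  intros HC Hg. apply NNPP. intro Hn.
  assert (HP : forall N : nat, exists x, Om x /\ INR N < Rabs (g x)).
  { intro N. apply NNPP. intro H2. apply Hn. exists (INR N). split; [apply pos_INR|].
    intros x Hx. apply Rnot_lt_le. intro H3. apply H2. eauto. }
  destruct (om_cluster Om HC _ HP) as [xs [Hxs Hcl]].
  destruct (Hg xs Hxs 1) as [d [Hd Hn2]]; [lra|].
  destruct (INR_big (Rabs (g xs) + 1)) as [N0 HN0].
  destruct (Hcl d Hd N0) as [N [x [HN [Hx [Hgx Hnx]]]]].
  specialize (Hn2 x Hx Hnx).
  assert (INR N0 <= INR N) by (apply le_INR; auto).
  pose proof (Rabs_triang_inv (g x) (g xs)). rewrite Rabs_minus_sym in Hn2. lra.
Qed.

Lemma contC_posmin {n} (Om : pt n -> Prop) g : compact_set Om -> contC Om g ->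
  (forall x, Om x -> 0 < g x) -> exists m, 0 < m /\ forall x, Om x -> m <= g x.
Proof.
  intros HC Hg Hpos. apply NNPP. intro Hn.
  assert (HP : forall N : nat, exists x, Om x /\ g x < / INR (S N)).
  { intro N. apply NNPP. intro H2. apply Hn. exists (/ INR (S N)). split.
    - apply Rinv_0_lt_compat, lt_0_INR; lia.
    - intros x Hx. apply Rnot_lt_le. intro H3. apply H2. eauto. }
  destruct (om_cluster Om HC _ HP) as [xs [Hxs Hcl]].
  pose proof (Hpos xs Hxs) as Hp.
  destruct (Hg xs Hxs (g xs / 2)) as [d [Hd Hn2]]; [lra|].
  destruct (INR_big (2 / g xs)) as [N0 HN0].
  destruct (Hcl d Hd N0) as [N [x [HN [Hx [Hgx Hnx]]]]].
  specialize (Hn2 x Hx Hnx).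
  assert (INR N0 <= INR N) by (apply le_INR; auto).
  assert (/ INR (S N) < g xs / 2).
  { rewrite S_INR. apply (Rmult_lt_reg_r (INR N + 1)). { pose proof (pos_INR N); lra. }
    rewrite Rinv_l by (pose proof (pos_INR N); lra).
    assert (HH : 2 / g xs < INR N + 1) by lra.
    apply (Rmult_lt_compat_l (g xs / 2)) in HH; [|lra].
    replace (g xs / 2 * (2 / g xs)) with 1 in HH by (field; lra). lra. }
  pose proof (Rle_abs (g xs - g x)). lra.
Qed.


Lemma int_cluster a b : forall P : nat -> R -> Prop,
  (forall N, exists s, a <= s <= b /\ P N s) ->
  exists ss, a <= ss <= b /\ forall eps, 0 < eps -> forall N0,
    exists N s, (N0 <= N)%nat /\ a <= s <= b /\ P N s /\ Rabs (s - ss) < eps.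
Proof.
  intros P HP.
  set (u := fun N => epsilon (inhabits 0) (fun s => a <= s <= b /\ P N s)).
  assert (Hu : forall N, a <= u N <= b /\ P N (u N)).
  { intro N. unfold u. apply epsilon_spec. apply HP. }
  destruct (Bolzano_Weierstrass u _ (compact_P3 a b) (fun N => proj1 (Hu N))) as [l Hl].
  assert (Hl' : forall eps, 0 < eps -> forall N0, exists N, (N0 <= N)%nat /\ Rabs (u N - l) < eps).
  { intros eps He N0. apply (Hl (fun y => Rabs (y - l) < eps) N0).
    exists (mkposreal eps He). intros y Hy. exact Hy. }
  assert (Hab : a <= l <= b).
  { split; apply Rnot_lt_le; intro Hc.
    - destruct (Hl' (a - l) ltac:(lra) 0%nat) as [N [_ HN]].
      destruct (Hu N) as [[H1 H2] _]. apply Rabs_def2 in HN. lra.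
    - destruct (Hl' (l - b) ltac:(lra) 0%nat) as [N [_ HN]].
      destruct (Hu N) as [[H1 H2] _]. apply Rabs_def2 in HN. lra. }
  exists l; split; auto. intros eps He N0.
  destruct (Hl' eps He N0) as [N [HN Hd]]. exists N, (u N). repeat split; try apply Hu; auto.
Qed.

Lemma exp_le x y : x <= y -> exp x <= exp y.
Proof. intros H. destruct (Rle_lt_or_eq _ _ H) as [H1|H1]; [left; now apply exp_increasing| subst; lra]. Qed.

Lemma exp_lip a b : Rabs (exp a - exp b) <= exp (Rmax a b) * Rabs (a - b).
Proof.
  destruct (Rle_dec b a) as [H|H].
  - rewrite Rmax_left by lra.
    pose proof (exp_ineq1_le (b - a)). pose proof (exp_pos a).
    assert (E : exp b = exp a * exp (b - a)) by (rewrite <- exp_plus; f_equal; ring).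
    assert (exp (b - a) <= 1) by (replace 1 with (exp 0) by apply exp_0; apply exp_le; lra).
    rewrite E. rewrite Rabs_right.
    2:{ assert (exp a * exp (b - a) <= exp a * 1) by (apply Rmult_le_compat_l; lra). lra. }
    rewrite (Rabs_right (a - b)) by lra.
    replace (exp a - exp a * exp (b - a)) with (exp a * (1 - exp (b - a))) by ring.
    apply Rmult_le_compat_l; lra.
  - rewrite Rmax_right by lra.
    pose proof (exp_ineq1_le (a - b)). pose proof (exp_pos b).
    assert (E : exp a = exp b * exp (a - b)) by (rewrite <- exp_plus; f_equal; ring).
    assert (exp (a - b) <= 1) by (replace 1 with (exp 0) by apply exp_0; apply exp_le; lra).
    rewrite E. rewrite Rabs_left1.
    2:{ assert (exp b * exp (a - b) <= exp b * 1) by (apply Rmult_le_compat_l; lra). lra. }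
    rewrite (Rabs_left (a - b)) by lra.
    replace (- (exp b * exp (a - b) - exp b)) with (exp b * (1 - exp (a - b))) by ring.
    apply Rmult_le_compat_l; lra.
Qed.

Lemma phibar_min {n} (phi : R -> pt n -> R) s : phibar phi s = phi (Rmin s 0).
Proof. unfold phibar. destruct (Rle_dec s 0); [rewrite Rmin_left | rewrite Rmin_right]; auto; lra. Qed.

Lemma Rmin0_abs s : Rabs (Rmin s 0) <= Rabs s.
Proof. unfold Rmin. destruct (Rle_dec s 0); [lra|]. rewrite Rabs_R0. apply Rabs_pos. Qed.

Lemma Rmin0_le s : Rmin s 0 <= 0.
Proof. apply Rmin_r. Qed.

Lemma Rmin0_dist s t : Rabs (Rmin s 0 - Rmin t 0) <= Rabs (s - t).
Proof.
  unfold Rmin. destruct (Rle_dec s 0), (Rle_dec t 0); try lra.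
  - rewrite Rminus_0_r. rewrite !Rabs_left1 by lra. lra.
  - rewrite Rminus_0_l, Rabs_Ropp. rewrite Rabs_left1 by lra. rewrite Rabs_right by lra. lra.
  - rewrite Rminus_diag, Rabs_R0. apply Rabs_pos.
Qed.

Definition UCs {n} (Om : pt n -> Prop) (w : R -> pt n -> R) : Prop :=
  forall S eps, 0 < eps -> exists d, 0 < d /\ forall s t, Rabs s <= S -> Rabs t <= S ->
    Rabs (s - t) < d -> forall x, Om x -> Rabs (w s x - w t x) <= eps.

Section Curves.
Variable n : nat.
Variable Om : pt n -> Prop.
Variable alpha : R.
Hypothesis Ha : 0 <= alpha.

Lemma supBUC_phibar phi c : supBUC_le Om alpha phi c ->
  forall s x, Om x -> Rabs (phibar phi s x) <= c * exp (alpha * Rabs s).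
Proof.
  intros H s x Hx. rewrite phibar_min.
  specialize (H (Rmin s 0) x (Rmin0_le s) Hx).
  pose proof (Rmin0_abs s).
  assert (E1 : exp (alpha * Rabs (Rmin s 0)) <= exp (alpha * Rabs s)).
  { apply exp_le. apply Rmult_le_compat_l; auto. }
  assert (E2 : Rabs (phi (Rmin s 0) x) = exp (alpha * Rabs (Rmin s 0)) *
     (exp (- alpha * Rabs (Rmin s 0)) * Rabs (phi (Rmin s 0) x))).
  { rewrite <- Rmult_assoc, <- exp_plus. replace (alpha * Rabs (Rmin s 0) + - alpha * Rabs (Rmin s 0)) with 0 by ring.
    rewrite exp_0; ring. }
  rewrite E2.
  assert (0 <= exp (- alpha * Rabs (Rmin s 0)) * Rabs (phi (Rmin s 0) x)).
  { apply Rmult_le_pos; [left; apply exp_pos | apply Rabs_pos]. }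
  pose proof (exp_pos (alpha * Rabs (Rmin s 0))).
  apply Rle_trans with (exp (alpha * Rabs (Rmin s 0)) * c).
  - apply Rmult_le_compat_l; lra.
  - rewrite Rmult_comm. apply Rmult_le_compat_l; lra.
Qed.

Lemma BUC_bound phi : BUC Om alpha phi ->
  exists C, 0 <= C /\ forall s x, Om x -> Rabs (phibar phi s x) <= C * exp (alpha * Rabs s).
Proof.
  intros [_ [[c Hc] _]]. exists (Rmax c 0). split; [apply Rmax_r|].
  intros s x Hx. eapply Rle_trans; [apply (supBUC_phibar _ _ Hc s x Hx)|].
  apply Rmult_le_compat_r; [left; apply exp_pos| apply Rmax_l].
Qed.

Lemma BUC_contC phi : BUC Om alpha phi -> forall s, contC Om (phibar phi s).
Proof. intros [H _] s. rewrite phibar_min. apply H, Rmin0_le. Qed.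

Lemma BUC_UC phi : BUC Om alpha phi -> UCs Om (phibar phi).
Proof.
  intros HB. pose proof HB as [_ [_ HU]].
  destruct (BUC_bound phi HB) as [C [HC Hb]].
  intros S eps He.
  set (E := exp (alpha * Rabs S)).
  assert (HE : 0 < E) by apply exp_pos.
  destruct (HU (eps / (2 * E))) as [d1 [Hd1 H1]].
  { apply Rdiv_lt_0_compat; lra. }
  set (d2 := eps / (2 * (C * E * alpha + 1))).
  assert (Hk : 0 <= C * E * alpha) by (apply Rmult_le_pos; [apply Rmult_le_pos|]; lra).
  assert (Hd2 : 0 < d2) by (apply Rdiv_lt_0_compat; lra).
  exists (Rmin d1 d2). split; [now apply Rmin_glb_lt|].
  intros s t Hs Ht Hst x Hx.
  rewrite !phibar_min.
  set (s' := Rmin s 0). set (t' := Rmin t 0).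
  assert (Hs' : Rabs s' <= Rabs S) by (pose proof (Rmin0_abs s); pose proof (Rle_abs S); unfold s'; lra).
  assert (Ht' : Rabs t' <= Rabs S) by (pose proof (Rmin0_abs t); pose proof (Rle_abs S); unfold t'; lra).
  assert (Hst' : Rabs (s' - t') <= Rabs (s - t)) by apply Rmin0_dist.
  assert (Hs0 : s' <= 0) by apply Rmin0_le. assert (Ht0 : t' <= 0) by apply Rmin0_le.
  specialize (H1 s' t' Hs0 Ht0 ltac:(pose proof (Rmin_l d1 d2); lra) x Hx).
  set (ps := exp (- alpha * Rabs s') * phi s' x) in *.
  set (pt_ := exp (- alpha * Rabs t') * phi t' x) in *.
  assert (Es : phi s' x = exp (alpha * Rabs s') * ps).
  { unfold ps. rewrite <- Rmult_assoc, <- exp_plus. replace (alpha * Rabs s' + - alpha * Rabs s') with 0 by ring.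
    rewrite exp_0; ring. }
  assert (Et : phi t' x = exp (alpha * Rabs t') * pt_).
  { unfold pt_. rewrite <- Rmult_assoc, <- exp_plus. replace (alpha * Rabs t' + - alpha * Rabs t') with 0 by ring.
    rewrite exp_0; ring. }
  assert (Hpt : Rabs pt_ <= C).
  { pose proof HB as [_ [[c Hc] _]].
    specialize (Hb t' x Hx). unfold pt_. rewrite Rabs_mult, Rabs_right by (left; apply exp_pos).
    rewrite phibar_min in Hb. rewrite Rmin_left in Hb by lra.
    apply (Rmult_le_compat_l (exp (- alpha * Rabs t'))) in Hb; [|left; apply exp_pos].
    rewrite <- Rmult_assoc, (Rmult_comm _ C), Rmult_assoc, <- exp_plus in Hb.
    replace (- alpha * Rabs t' + alpha * Rabs t') with 0 in Hb by ring. rewrite exp_0 in Hb. lra. }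
  rewrite Es, Et.
  replace (exp (alpha * Rabs s') * ps - exp (alpha * Rabs t') * pt_) with
     (exp (alpha * Rabs s') * (ps - pt_) + (exp (alpha * Rabs s') - exp (alpha * Rabs t')) * pt_) by ring.
  eapply Rle_trans; [apply Rabs_triang|]. rewrite !Rabs_mult.
  assert (Ee1 : exp (alpha * Rabs s') <= E).
  { apply exp_le. apply Rmult_le_compat_l; auto. }
  assert (A1 : Rabs (exp (alpha * Rabs s')) * Rabs (ps - pt_) <= eps / 2).
  { rewrite Rabs_right by (left; apply exp_pos).
    apply Rle_trans with (E * (eps / (2 * E))).
    - apply Rmult_le_compat; try apply Rabs_pos; try (left; apply exp_pos); lra.
    - right; field; lra. }
  assert (A2 : Rabs (exp (alpha * Rabs s') - exp (alpha * Rabs t')) <= E * alpha * Rabs (s - t)).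
  { eapply Rle_trans; [apply exp_lip|].
    assert (exp (Rmax (alpha * Rabs s') (alpha * Rabs t')) <= E).
    { apply exp_le. apply Rmax_lub; apply Rmult_le_compat_l; auto. }
    assert (Rabs (alpha * Rabs s' - alpha * Rabs t') <= alpha * Rabs (s - t)).
    { rewrite <- Rmult_minus_distr_l, Rabs_mult, (Rabs_right alpha) by lra.
      apply Rmult_le_compat_l; auto. eapply Rle_trans; [apply Rabs_triang_inv2|]. auto. }
    rewrite Rmult_assoc. apply Rmult_le_compat; try apply Rabs_pos; try (left; apply exp_pos); auto. }
  assert (A3 : E * alpha * Rabs (s - t) * C <= eps / 2).
  { assert (Rabs (s - t) < d2) by (pose proof (Rmin_r d1 d2); lra).
    apply Rle_trans with ((C * E * alpha) * d2).
    - replace (E * alpha * Rabs (s - t) * C) with ((C * E * alpha) * Rabs (s - t)) by ring.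
      apply Rmult_le_compat_l; lra.
    - unfold d2. replace (C * E * alpha * (eps / (2 * (C * E * alpha + 1)))) with
        (eps / 2 * ((C * E * alpha) / (C * E * alpha + 1))) by (field; lra).
      replace (eps / 2) with (eps / 2 * 1) at 2 by ring. apply Rmult_le_compat_l; [lra|].
      apply (Rmult_le_reg_r (C * E * alpha + 1)); [lra|]. field_simplify; lra. }
  assert (A4 : Rabs (exp (alpha * Rabs s') - exp (alpha * Rabs t')) * Rabs pt_ <= E * alpha * Rabs (s - t) * C).
  { apply Rmult_le_compat; try apply Rabs_pos; auto. }
  lra.
Qed.

End Curves.

Lemma UCs_cont {n} (Om : pt n -> Prop) w : UCs Om w -> forall x, Om x -> forall z, continuity_pt (fun s => w s x) z.
Proof.
  intros H x Hx z. apply cont_eps. intros eps He.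
  destruct (H (Rabs z + 1) eps He) as [d [Hd Hw]].
  exists (Rmin d 1). split; [apply Rmin_glb_lt; lra|].
  intros t Ht. apply Hw; auto.
  - pose proof (Rmin_r d 1). pose proof (Rabs_triang_inv t z). lra.
  - lra.
  - pose proof (Rmin_l d 1). lra.
Qed.

Lemma UCs_RInt {n} (Om : pt n -> Prop) w : UCs Om w -> forall x, Om x -> forall a b, ex_RInt (fun s => w s x) a b.
Proof. intros H x Hx a b. apply exRI_cont. now apply (UCs_cont Om). Qed.

Definition kf {n} (f : (pt n -> R) -> (pt n -> R)) (phi : R -> pt n -> R) (s : R) (x : pt n) : R :=
  f (phibar phi s) x.

Section FProps.
Variable n : nat.
Variable Om : pt n -> Prop.
Variable alpha Mf : R.
Variable f : (pt n -> R) -> (pt n -> R).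
Hypothesis HC : compact_set Om.
Hypothesis Ha : 0 <= alpha.
Hypothesis Hfc : forall g, contC Om g -> contC Om (f g).
Hypothesis Hlip : lipschitzC Om f.
Hypothesis Hpos : forall g x, contC Om g -> Om x -> 0 < f g x <= Mf.
Hypothesis Hmono : forall g h, contC Om g -> contC Om h -> (forall x, Om x -> g x <= h x) ->
     forall x, Om x -> f h x <= f g x.

Lemma lipL : exists L, 0 <= L /\ forall g h, contC Om g -> contC Om h -> forall c,
  (forall x, Om x -> Rabs (g x - h x) <= c) -> forall x, Om x -> Rabs (f g x - f h x) <= L * c.
Proof.
  destruct Hlip as [L HL]. exists (Rmax L 0). split; [apply Rmax_r|].
  intros g h Hg Hh c Hc x Hx.
  assert (c0 : 0 <= c) by (specialize (Hc x Hx); pose proof (Rabs_pos (g x - h x)); lra).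
  eapply Rle_trans; [apply (HL g h Hg Hh c Hc x Hx)|].
  apply Rmult_le_compat_r; auto. apply Rmax_l.
Qed.

Lemma lowb : forall B, exists m, 0 < m /\ forall g, contC Om g -> (forall x, Om x -> Rabs (g x) <= B) ->
  forall x, Om x -> m <= f g x.
Proof.
  intros B.
  destruct (contC_posmin Om (f (fun _ => B)) HC (Hfc _ (contC_const Om B))) as [m [Hm Hmin]].
  { intros x Hx. apply Hpos; auto. apply contC_const. }
  exists m; split; auto. intros g Hg HB x Hx.
  apply Rle_trans with (f (fun _ => B) x); [apply Hmin; auto|].
  apply Hmono; auto. apply contC_const.
  intros y Hy. specialize (HB y Hy). pose proof (Rle_abs (g y)). lra.
Qed.

Lemma kf_UC phi : BUC Om alpha phi -> UCs Om (kf f phi).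
Proof.
  intros HB. destruct lipL as [L [HL0 HL]].
  intros S eps He.
  destruct (BUC_UC n Om alpha Ha phi HB S (eps / (L + 1))) as [d [Hd H]].
  { apply Rdiv_lt_0_compat; lra. }
  exists d; split; auto. intros s t Hs Ht Hst x Hx. unfold kf.
  eapply Rle_trans.
  - apply (HL _ _ (BUC_contC n Om alpha phi HB s) (BUC_contC n Om alpha phi HB t) (eps / (L + 1))); auto.
  - replace eps with ((L + 1) * (eps / (L + 1))) at 2 by (field; lra).
    apply Rmult_le_compat_r; [|lra]. left; apply Rdiv_lt_0_compat; lra.
Qed.

Lemma kf_pos phi : BUC Om alpha phi -> forall s x, Om x -> 0 < kf f phi s x <= Mf.
Proof. intros HB s x Hx. apply Hpos; auto. apply (BUC_contC n Om alpha phi HB). Qed.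

Lemma kf_low phi C : (forall s x, Om x -> Rabs (phibar phi s x) <= C * exp (alpha * Rabs s)) ->
  BUC Om alpha phi ->
  forall S, exists m, 0 < m /\ forall s x, Rabs s <= S -> Om x -> m <= kf f phi s x.
Proof.
  intros Hb HB S. destruct (lowb (Rabs C * exp (alpha * S))) as [m [Hm Hl]].
  exists m; split; auto. intros s x Hs Hx. unfold kf. apply Hl; auto.
  - apply (BUC_contC n Om alpha phi HB).
  - intros y Hy. eapply Rle_trans; [apply Hb; auto|].
    apply Rmult_le_compat; [| left; apply exp_pos | apply Rle_abs | apply exp_le].
    + destruct (Rle_dec 0 C); auto. pose proof (Hb s y Hy). pose proof (Rabs_pos (phibar phi s y)).
      pose proof (exp_pos (alpha * Rabs s)). nra.
    + apply Rmult_le_compat_l; auto.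
Qed.

End FProps.

Lemma inv_small r : 0 < r -> exists N0 : nat, forall N, (N0 <= N)%nat -> / INR (S N) <= r.
Proof.
  intros Hr. destruct (INR_big (/ r)) as [N0 HN0]. exists N0. intros N HN.
  assert (INR N0 <= INR N) by (apply le_INR; auto).
  rewrite S_INR. assert (0 < / r) by (apply Rinv_0_lt_compat; auto).
  replace r with (/ / r) by (field; lra). left. apply Rinv_lt_contravar; [apply Rmult_lt_0_compat|]; lra.
Qed.

Lemma invS_pos N : 0 < / INR (S N).
Proof. apply Rinv_0_lt_compat, lt_0_INR; lia. Qed.

Lemma absle s b : Rabs s <= b -> - b <= s <= b.
Proof. intros H. pose proof (Rle_abs s). pose proof (Rle_abs (-s)). rewrite Rabs_Ropp in *. lra. Qed.

Lemma abs3 a b c : Rabs (a + b - c) <= Rabs a + Rabs b + Rabs c.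
Proof. unfold Rminus. eapply Rle_trans; [apply Rabs_triang|]. rewrite Rabs_Ropp.
  pose proof (Rabs_triang a b). lra. Qed.

Definition PhiW {n} (w : R -> pt n -> R) (tau : R) (x : pt n) : R := RInt (fun s => w s x) (- tau) 0.

Section Param.
Variable n : nat.
Variable Om : pt n -> Prop.

Lemma equicont w : UCs Om w -> (forall s, contC Om (w s)) ->
  forall Sb x0, Om x0 -> forall eps, 0 < eps -> exists r, 0 < r /\
    forall x, Om x -> near x0 x r -> forall s, Rabs s <= Sb -> Rabs (w s x - w s x0) <= eps.
Proof.
  intros HU Hc Sb x0 Hx0 eps He. apply NNPP. intro Hn.
  assert (HP : forall N : nat, exists s, -Sb <= s <= Sb /\
     exists x, Om x /\ near x0 x (/ INR (Datatypes.S N)) /\ eps < Rabs (w s x - w s x0)).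
  { intro N. apply NNPP. intro H2. apply Hn. exists (/ INR (Datatypes.S N)). split; [apply invS_pos|].
    intros x Hx Hnr s Hs. apply Rnot_lt_le. intro H3. apply H2. exists s. split.
    - now apply absle.
    - exists x; auto. }
  destruct (int_cluster _ _ _ HP) as [ss [Hss Hcl]].
  destruct (HU Sb (eps / 3)) as [d [Hd Hw]]; [lra|].
  destruct (Hc ss x0 Hx0 (eps / 3)) as [r0 [Hr0 Hr0']]; [lra|].
  destruct (inv_small r0 Hr0) as [N0 HN0].
  destruct (Hcl d Hd N0) as [N [s [HN [Hs [[x [Hx [Hnx Hgt]]] Hds]]]]].
  assert (Hss' : Rabs ss <= Sb) by (apply Rabs_le; lra).
  assert (Hs' : Rabs s <= Sb) by (apply Rabs_le; lra).
  pose proof (Hw s ss Hs' Hss' Hds x Hx) as A.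
  pose proof (Hw s ss Hs' Hss' Hds x0 Hx0) as B.
  assert (near x0 x r0) by (apply (near_mono _ _ _ _ Hnx); apply HN0; auto).
  pose proof (Hr0' x Hx H) as C.
  rewrite Rabs_minus_sym in B.
  pose proof (abs3 (w s x - w ss x) (w ss x0 - w s x0) (w ss x0 - w ss x)) as D.
  replace (w s x - w ss x + (w ss x0 - w s x0) - (w ss x0 - w ss x)) with (w s x - w s x0) in D by ring.
  lra.
Qed.

Lemma param_cont w tau Sb W : UCs Om w -> (forall s, contC Om (w s)) ->
  (forall s x, Rabs s <= Sb -> Om x -> Rabs (w s x) <= W) ->
  (forall x, Om x -> Rabs (tau x) <= Sb) -> contC Om tau ->
  contC Om (fun x => RInt (fun s => w s x) (- tau x) 0).
Proof.
  intros HU Hc HW Ht Htc x0 Hx0 eps He.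
  assert (S0 : 0 <= Sb) by (pose proof (Ht x0 Hx0); pose proof (Rabs_pos (tau x0)); lra).
  assert (W0 : 0 <= W) by (pose proof (HW 0 x0 ltac:(rewrite Rabs_R0; lra) Hx0); pose proof (Rabs_pos (w 0 x0)); lra).
  destruct (equicont w HU Hc Sb x0 Hx0 (eps / (2 * (Sb + 1)))) as [r1 [Hr1 H1]].
  { apply Rdiv_lt_0_compat; lra. }
  destruct (Htc x0 Hx0 (eps / (2 * (W + 1)))) as [r2 [Hr2 H2]].
  { apply Rdiv_lt_0_compat; lra. }
  exists (Rmin r1 r2). split; [now apply Rmin_glb_lt|].
  intros x Hx Hn.
  assert (N1 : near x0 x r1) by (apply (near_mono _ _ _ _ Hn); apply Rmin_l).
  assert (N2 : near x0 x r2) by (apply (near_mono _ _ _ _ Hn); apply Rmin_r).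
  specialize (H2 x Hx N2).
  pose proof (UCs_RInt Om w HU x0 Hx0) as I0. pose proof (UCs_RInt Om w HU x Hx) as I1.
  rewrite <- (RI_chasles (fun s => w s x) (- tau x) (- tau x0) 0) by auto.
  replace (RInt (fun s => w s x0) (- tau x0) 0 - (RInt (fun s => w s x) (- tau x) (- tau x0) + RInt (fun s => w s x) (- tau x0) 0))
    with (- RInt (fun s => w s x) (- tau x) (- tau x0) - RInt (fun s => w s x - w s x0) (- tau x0) 0)
    by (rewrite (RI_minus (fun s => w s x) (fun s => w s x0)) by auto; ring).
  eapply Rle_lt_trans; [apply Rabs_triang|]. rewrite !Rabs_Ropp.
  assert (A1 : Rabs (RInt (fun s => w s x) (- tau x) (- tau x0)) <= Rabs (tau x0 - tau x) * W).
  { replace (Rabs (tau x0 - tau x)) with (Rabs (- tau x0 - - tau x)) by (rewrite <- Rabs_Ropp; f_equal; ring).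
    apply RI_abs; auto. intros t Htt. apply HW; auto.
    pose proof (Ht x Hx). pose proof (Ht x0 Hx0).
    apply Rabs_le. apply Rabs_le_between' in H || idtac.
    assert (Hm1 : Rmin (- tau x) (- tau x0) >= - Sb). { apply Rmin_case; apply Rle_ge; apply Ropp_le_contravar in H || idtac;
      [pose proof (Rle_abs (tau x)) | pose proof (Rle_abs (tau x0))]; lra. }
    assert (Hm2 : Rmax (- tau x) (- tau x0) <= Sb). { apply Rmax_case;
      [pose proof (Rle_abs (- tau x)) | pose proof (Rle_abs (- tau x0))]; rewrite Rabs_Ropp in *; lra. }
    lra. }
  assert (A2 : Rabs (RInt (fun s => w s x - w s x0) (- tau x0) 0) <= Rabs (0 - - tau x0) * (eps / (2 * (Sb + 1)))).
  { apply RI_abs. { apply exRI_minus; auto. }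
    intros t Htt. apply H1; auto. apply Rabs_le.
    pose proof (Ht x0 Hx0). pose proof (Rle_abs (tau x0)). pose proof (Rle_abs (- tau x0)). rewrite Rabs_Ropp in *.
    split; [apply Rle_trans with (Rmin (- tau x0) 0)|apply Rle_trans with (Rmax (- tau x0) 0)]; try lra;
    [apply Rmin_case | apply Rmax_case]; lra. }
  assert (A3 : Rabs (tau x0 - tau x) * W <= eps / (2 * (W + 1)) * W).
  { apply Rmult_le_compat_r; auto. left; auto. }
  assert (A4 : eps / (2 * (W + 1)) * W < eps / 2).
  { replace (eps / (2 * (W + 1)) * W) with (eps / 2 - eps / (2 * (W + 1))) by (field; lra).
    assert (0 < eps / (2 * (W + 1))) by (apply Rdiv_lt_0_compat; lra). lra. }
  assert (A5 : Rabs (0 - - tau x0) * (eps / (2 * (Sb + 1))) < eps / 2).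
  { replace (0 - - tau x0) with (tau x0) by ring.
    apply Rle_lt_trans with (Sb * (eps / (2 * (Sb + 1)))).
    - apply Rmult_le_compat_r; [left; apply Rdiv_lt_0_compat; lra| apply Ht; auto].
    - replace (Sb * (eps / (2 * (Sb + 1)))) with (eps / 2 - eps / (2 * (Sb + 1))) by (field; lra).
      assert (0 < eps / (2 * (Sb + 1))) by (apply Rdiv_lt_0_compat; lra). lra. }
  lra.
Qed.

End Param.

Section PhiSec.
Variable n : nat.
Variable Om : pt n -> Prop.
Variable alpha Mf : R.
Variable f : (pt n -> R) -> (pt n -> R).
Hypothesis HC : compact_set Om.
Hypothesis Ha : 0 <= alpha.
Hypothesis Hfc : forall g, contC Om g -> contC Om (f g).
Hypothesis Hlip : lipschitzC Om f.
Hypothesis Hpos : forall g x, contC Om g -> Om x -> 0 < f g x <= Mf.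
Hypothesis Hmono : forall g h, contC Om g -> contC Om h -> (forall x, Om x -> g x <= h x) ->
     forall x, Om x -> f h x <= f g x.

Definition Phi (phi : R -> pt n -> R) tau x : R := PhiW (kf f phi) tau x.

Lemma kRI phi : BUC Om alpha phi -> forall x, Om x -> forall a b, ex_RInt (fun s => kf f phi s x) a b.
Proof. intros HB. apply UCs_RInt. apply (kf_UC n Om alpha f Ha Hlip); auto. Qed.

Lemma Phi_chasles phi t1 t2 x : BUC Om alpha phi -> Om x ->
  Phi phi t1 x - Phi phi t2 x = RInt (fun s => kf f phi s x) (- t1) (- t2).
Proof.
  intros HB Hx. unfold Phi, PhiW. rewrite <- (RI_chasles _ (- t1) (- t2) 0) by (apply kRI; auto). ring.
Qed.

Lemma Phi_mono phi t1 t2 x : BUC Om alpha phi -> Om x -> t1 <= t2 -> Phi phi t1 x <= Phi phi t2 x.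
Proof.
  intros HB Hx Ht. assert (Phi phi t2 x - Phi phi t1 x >= 0); [|lra].
  rewrite Phi_chasles by auto. apply Rle_ge.
  replace 0 with ((- t1 - - t2) * 0) by ring.
  apply RI_ge; [lra| apply kRI; auto|]. intros. left. apply (kf_pos n Om alpha Mf f Hpos); auto.
Qed.

Lemma Phi_rate phi t1 t2 x m : BUC Om alpha phi -> Om x -> t1 <= t2 ->
  (forall s, - t2 <= s <= - t1 -> m <= kf f phi s x) -> m * (t2 - t1) <= Phi phi t2 x - Phi phi t1 x.
Proof.
  intros HB Hx Ht Hm. rewrite Phi_chasles by auto.
  replace (m * (t2 - t1)) with ((- t1 - - t2) * m) by ring.
  apply RI_ge; [lra| apply kRI; auto| auto].
Qed.

Lemma Phi_lip phi t1 t2 x : BUC Om alpha phi -> Om x -> Rabs (Phi phi t1 x - Phi phi t2 x) <= Mf * Rabs (t1 - t2).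
Proof.
  intros HB Hx. rewrite Phi_chasles by auto. rewrite Rmult_comm.
  replace (Rabs (t1 - t2)) with (Rabs (- t2 - - t1)) by (f_equal; ring).
  apply RI_abs; [apply kRI; auto|]. intros. pose proof (kf_pos n Om alpha Mf f Hpos phi HB t x Hx).
  rewrite Rabs_right; lra.
Qed.

Lemma Phi_contpt phi x : BUC Om alpha phi -> Om x -> continuity (fun t => Phi phi t x).
Proof.
  intros HB Hx z. apply cont_eps. intros eps He.
  assert (HM : 0 < Mf) by (pose proof (kf_pos n Om alpha Mf f Hpos phi HB 0 x Hx); lra).
  exists (eps / Mf). split; [apply Rdiv_lt_0_compat; lra|]. intros t Ht.
  eapply Rle_trans; [apply Phi_lip; auto|].
  apply Rle_trans with (Mf * (eps / Mf)); [apply Rmult_le_compat_l; lra | right; field; lra].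
Qed.

Lemma Phi_rate_abs phi t1 t2 x m Sb : BUC Om alpha phi -> Om x -> Rabs t1 <= Sb -> Rabs t2 <= Sb ->
  (forall s, Rabs s <= Sb -> m <= kf f phi s x) -> m * Rabs (t2 - t1) <= Rabs (Phi phi t2 x - Phi phi t1 x).
Proof.
  intros HB Hx H1 H2 Hm. destruct (Rle_dec t1 t2).
  - rewrite Rabs_right by lra. 
    assert (m * (t2 - t1) <= Phi phi t2 x - Phi phi t1 x).
    { apply Phi_rate; auto. intros s Hs. apply Hm. apply absle in H1. apply absle in H2. apply Rabs_le; lra. }
    eapply Rle_trans; [apply H|apply Rle_abs].
  - rewrite Rabs_left by lra. 
    assert (m * (t1 - t2) <= Phi phi t1 x - Phi phi t2 x).
    { apply Phi_rate; auto; try lra. intros s Hs. apply Hm. apply absle in H1. apply absle in H2. apply Rabs_le; lra. }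
    rewrite Rabs_minus_sym. replace (- (t2 - t1)) with (t1 - t2) by ring.
    eapply Rle_trans; [apply H|apply Rle_abs].
Qed.

Definition distP (q p : prodX n) (c : R) : Prop :=
  supBUC_le Om alpha (fun t y => fst q t y - fst p t y) c /\ supC_le Om (fun y => snd q y - snd p y) c.

Lemma distP_curve (q p : prodX n) c : distP q p c -> forall s x, Om x ->
  Rabs (phibar (fst q) s x - phibar (fst p) s x) <= c * exp (alpha * Rabs s).
Proof.
  intros [H _] s x Hx. pose proof (supBUC_phibar n Om alpha Ha _ c H s x Hx) as K.
  rewrite !phibar_min in *. exact K.
Qed.

Lemma distP_k (q p : prodX n) c : BUC Om alpha (fst q) -> BUC Om alpha (fst p) -> distP q p c ->
  exists L, 0 <= L /\ forall s x, Om x -> Rabs (kf f (fst q) s x - kf f (fst p) s x) <= L * (c * exp (alpha * Rabs s)).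
Proof.
  intros Hq Hp Hd. destruct (lipL n Om f Hlip) as [L [HL0 HL]]. exists L; split; auto.
  intros s x Hx. unfold kf. apply HL; auto; try apply (BUC_contC n Om alpha); auto.
  intros y Hy. apply (distP_curve q p c Hd s y Hy).
Qed.

Lemma Phi_diff (q p : prodX n) c tau x L : BUC Om alpha (fst q) -> BUC Om alpha (fst p) -> Om x ->
  (forall s x, Om x -> Rabs (kf f (fst q) s x - kf f (fst p) s x) <= L * (c * exp (alpha * Rabs s))) ->
  forall Sb, Rabs tau <= Sb ->
  Rabs (Phi (fst q) tau x - Phi (fst p) tau x) <= Sb * (L * (c * exp (alpha * Sb))).
Proof.
  intros Hq Hp Hx HL Sb Ht. unfold Phi, PhiW. rewrite <- RI_minus by (apply kRI; auto).
  assert (S0 : 0 <= Sb) by (pose proof (Rabs_pos tau); lra).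
  eapply Rle_trans; [apply (RI_abs _ _ _ (L * (c * exp (alpha * Sb))))|].
  - apply exRI_minus; apply kRI; auto.
  - intros t Htt. eapply Rle_trans; [apply HL; auto|].
    assert (0 <= L * c).
    { pose proof (HL 0 x Hx). pose proof (Rabs_pos (kf f (fst q) 0 x - kf f (fst p) 0 x)).
      rewrite Rabs_R0, Rmult_0_r, exp_0, Rmult_1_r in H. lra. }
    assert (E : exp (alpha * Rabs t) <= exp (alpha * Sb)).
    { apply exp_le.
      apply Rmult_le_compat_l; auto. apply Rabs_le. apply absle in Ht.
      assert (Rmin (-tau) 0 >= - Sb) by (apply Rmin_case; lra).
      assert (Rmax (-tau) 0 <= Sb) by (apply Rmax_case; lra). lra. }
    replace (L * (c * exp (alpha * Rabs t))) with ((L * c) * exp (alpha * Rabs t)) by ring.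
    replace (L * (c * exp (alpha * Sb))) with ((L * c) * exp (alpha * Sb)) by ring.
    apply Rmult_le_compat_l; auto.
  - replace (Rabs (0 - - tau)) with (Rabs tau) by (f_equal; ring). apply Rmult_le_compat_r; auto.
    assert (0 <= L * c).
    { pose proof (HL 0 x Hx). pose proof (Rabs_pos (kf f (fst q) 0 x - kf f (fst p) 0 x)).
      rewrite Rabs_R0, Rmult_0_r, exp_0, Rmult_1_r in H. lra. }
    pose proof (exp_pos (alpha * Sb)). rewrite <- Rmult_assoc. apply Rmult_le_pos; lra.
Qed.


Let kUC := kf_UC n Om alpha f Ha Hlip.
Let kpos := kf_pos n Om alpha Mf f Hpos.
Let kRI' := kRI.
Let lowb' := lowb n Om Mf f HC Hfc Hpos Hmono.

Lemma Rint_Phi phi x T : BUC Om alpha phi -> Om x -> 0 <= T ->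
  Rint (fun s => f (phi s) x) (- T) 0 = Phi phi T x.
Proof.
  intros HB Hx HT.
  assert (E : forall s, Rmin (- T) 0 < s < Rmax (- T) 0 -> kf f phi s x = f (phi s) x).
  { intros s Hs. rewrite Rmax_right in Hs by lra. unfold kf, phibar.
    destruct (Rle_dec s 0); [reflexivity| lra]. }
  rewrite Rint_RInt.
  - unfold Phi, PhiW. symmetry. apply RInt_ext. exact E.
  - apply (ex_RInt_ext (fun s => kf f phi s x)); [exact E| apply kRI'; auto].
Qed.

Lemma tauhat_Phi (q : prodX n) x : BUC Om alpha (fst q) -> Om x ->
  (exists t, Phi (fst q) t x = snd q x) -> Phi (fst q) (tauhat f q x) x = snd q x.
Proof.
  intros HB Hx [t Ht].
  assert (K : forall t, Rint (fun s => f (phibar (fst q) s) x) (- t) 0 = Phi (fst q) t x).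
  { intro t0. rewrite Rint_RInt; [reflexivity|]. apply (kRI' (fst q) HB x Hx). }
  unfold tauhat. rewrite <- K. apply epsilon_spec. exists t. rewrite K. auto.
Qed.

Lemma Phi_zero phi x : Phi phi 0 x = 0.
Proof. unfold Phi, PhiW. rewrite Ropp_0. exact (RInt_point (V:=R_CompleteNormedModule) 0 _). Qed.

Lemma UT (p : prodX n) : Dtau Om alpha f p ->
  exists T eta, 1 <= T /\ 0 < eta /\ forall x, Om x -> snd p x + eta <= Phi (fst p) T x.
Proof.
  intros [[HB Hdc] HD].
  assert (Sa : forall x, Om x -> exists T, 1 <= T /\ snd p x < Phi (fst p) T x).
  { intros x Hx. destruct (Rlt_dec 0 (snd p x)) as [Hp|Hp].
    - destruct (HD x Hx Hp) as [T0 [HT0 HT0']].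
      rewrite Rint_Phi in HT0' by auto.
      exists (Rmax T0 1). split; [apply Rmax_r|].
      eapply Rlt_le_trans; [apply HT0'|]. apply Phi_mono; auto. apply Rmax_l.
    - exists 1. split; [lra|].
      destruct (BUC_bound n Om alpha Ha _ HB) as [C [HC0 HCb]].
      destruct (kf_low n Om alpha Mf f HC Ha Hfc Hpos Hmono (fst p) C HCb HB 1) as [m [Hm Hml]].
      assert (m * (1 - 0) <= Phi (fst p) 1 x - Phi (fst p) 0 x).
      { apply Phi_rate; auto; try lra. intros s Hs. apply Hml; auto. apply Rabs_le; lra. }
      rewrite Phi_zero in H. lra. }
  apply NNPP. intro Hn.
  assert (HP : forall N : nat, exists x, Om x /\ Phi (fst p) (INR N + 1) x < snd p x + / INR (S N)).
  { intro N. apply NNPP. intro H2. apply Hn. exists (INR N + 1), (/ INR (S N)).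
    split; [pose proof (pos_INR N); lra|]. split; [apply invS_pos|].
    intros x Hx. apply Rnot_lt_le. intro H3. apply H2. exists x; split; auto. }
  destruct (om_cluster Om HC _ HP) as [xs [Hxs Hcl]].
  destruct (Sa xs Hxs) as [Ts [HTs HTs']].
  set (g := Phi (fst p) Ts xs - snd p xs).
  assert (Hg : 0 < g) by (unfold g; lra).
  assert (Hcont : contC Om (fun x => Phi (fst p) Ts x - snd p x)).
  { apply contC_minus; auto.
    apply (contC_ext Om (fun x => RInt (fun s => kf f (fst p) s x) (- (fun _ => Ts) x) 0)).
    - apply (param_cont n Om _ _ Ts Mf); auto.
      + intro s. apply Hfc. apply (BUC_contC n Om alpha); auto.
      + intros s x _ Hx. pose proof (kpos _ HB s x Hx). rewrite Rabs_right; lra.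
      + intros x _. rewrite Rabs_right; lra.
      + apply contC_const.
    - intros; reflexivity. }
  destruct (Hcont xs Hxs (g / 2)) as [r [Hr Hr']]; [lra|].
  destruct (INR_big Ts) as [N1 HN1].
  destruct (inv_small (g / 2)) as [N2 HN2]; [lra|].
  destruct (Hcl r Hr (Nat.max N1 N2)) as [N [x [HN [Hx [HPx Hnx]]]]].
  specialize (Hr' x Hx Hnx).
  assert (INR N1 <= INR N) by (apply le_INR; lia).
  assert (/ INR (S N) <= g / 2) by (apply HN2; lia).
  assert (Phi (fst p) Ts x <= Phi (fst p) (INR N + 1) x) by (apply Phi_mono; auto; lra).
  unfold g in *. pose proof (Rle_abs (Phi (fst p) Ts xs - snd p xs - (Phi (fst p) Ts x - snd p x))).
  lra.
Qed.


Lemma distP_refl (p : prodX n) : distP p p 0.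
Proof.
  split.
  - intros t x _ _. rewrite Rminus_diag, Rabs_R0, Rmult_0_r. lra.
  - intros x _. rewrite Rminus_diag, Rabs_R0. lra.
Qed.

Lemma Phi_cont_shift phi x a : BUC Om alpha phi -> Om x -> continuity (fun t => Phi phi t x - a).
Proof.
  intros HB Hx z. pose proof (Phi_contpt phi x HB Hx z) as H.
  intros eps He. destruct (H eps He) as [d [Hd Hd']]. exists d; split; auto.
  intros t Ht. specialize (Hd' t Ht). simpl in *. unfold R_dist in *.
  replace (Phi phi t x - a - (Phi phi z x - a)) with (Phi phi t x - Phi phi z x) by ring. auto.
Qed.

Lemma prepack (p : prodX n) : Dtau Om alpha f p -> exists Sb m d0 C L,
  1 <= Sb /\ 0 < m /\ 0 < d0 /\ d0 <= 1 /\ 0 <= C /\ 0 <= L /\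
  forall q c, memP Om alpha q -> distP q p c -> c < d0 ->
   Dtau Om alpha f q /\
   (forall s x, Om x -> Rabs (phibar (fst q) s x) <= C * exp (alpha * Rabs s)) /\
   (forall s x, Rabs s <= Sb -> Om x -> m <= kf f (fst q) s x) /\
   (forall s x, Om x -> Rabs (kf f (fst q) s x - kf f (fst p) s x) <= L * (c * exp (alpha * Rabs s))) /\
   (forall x, Om x -> Phi (fst q) (tauhat f q x) x = snd q x /\ Rabs (tauhat f q x) <= Sb - 1).
Proof.
  intros HD. pose proof HD as [[HBp Hdp] _].
  destruct (UT p HD) as [T [eta [HT [Heta HUT]]]].
  destruct (contC_bounded Om (snd p) HC Hdp) as [Bd [HBd0 HBd]].
  destruct (BUC_bound n Om alpha Ha _ HBp) as [Cp [HCp HCpb]].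
  destruct (lowb' (Cp + 1)) as [m0 [Hm0 Hm0l]].
  set (T' := (Bd + 2) / m0).
  assert (HT' : 0 < T') by (apply Rdiv_lt_0_compat; lra).
  assert (HT'e : m0 * T' = Bd + 2) by (unfold T'; field; lra).
  set (Sb := T + T' + 1).
  destruct (lowb' ((Cp + 1) * exp (alpha * Sb))) as [m [Hm Hml]].
  destruct (lipL n Om f Hlip) as [L [HL0 HL]].
  set (K := 1 + T * (L * exp (alpha * T))).
  assert (HK : 1 <= K).
  { unfold K. assert (0 <= T * (L * exp (alpha * T))); [|lra].
    apply Rmult_le_pos; [lra|]. apply Rmult_le_pos; [lra|left; apply exp_pos]. }
  set (d0 := Rmin 1 (eta / (2 * K))).
  assert (Hd0 : 0 < d0) by (apply Rmin_glb_lt; [lra| apply Rdiv_lt_0_compat; lra]).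
  exists Sb, m, d0, (Cp + 1), L.
  split; [unfold Sb; lra|]. split; [auto|]. split; [auto|]. split; [apply Rmin_l|].
  split; [lra|]. split; [auto|].
  intros q c [HBq Hdq] Hd Hc.
  assert (Hc1 : c <= 1) by (pose proof (Rmin_l 1 (eta / (2 * K))); fold d0 in H; lra).
  assert (HcK : c * K < eta / 2).
  { destruct (Rle_dec 0 c) as [c0|c0].
    - assert (c < eta / (2 * K)) by (pose proof (Rmin_r 1 (eta / (2 * K))); fold d0 in H; lra).
      apply (Rmult_lt_compat_r K) in H; [|lra]. replace (eta / (2 * K) * K) with (eta / 2) in H by (field; lra). lra.
    - assert (c * K <= 0) by (apply Rmult_le_0_r; lra). lra. }
  assert (Hcb : forall s x, Om x -> Rabs (phibar (fst q) s x) <= (Cp + 1) * exp (alpha * Rabs s)).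
  { intros s x Hx. pose proof (distP_curve q p c Hd s x Hx) as D. pose proof (HCpb s x Hx).
    pose proof (Rabs_triang_inv (phibar (fst q) s x) (phibar (fst p) s x)).
    pose proof (exp_pos (alpha * Rabs s)).
    assert (c * exp (alpha * Rabs s) <= 1 * exp (alpha * Rabs s)) by (apply Rmult_le_compat_r; lra). lra. }
  assert (Hklow : forall s x, Rabs s <= Sb -> Om x -> m <= kf f (fst q) s x).
  { intros s x Hs Hx. unfold kf. apply Hml; auto. { apply (BUC_contC n Om alpha); auto. }
    intros y Hy. eapply Rle_trans; [apply Hcb; auto|]. apply Rmult_le_compat_l; [lra|].
    apply exp_le. apply Rmult_le_compat_l; auto. }
  assert (Hk0 : forall s x, 0 <= s -> Om x -> m0 <= kf f (fst q) s x).
  { intros s x Hs Hx. unfold kf. apply Hm0l; auto. { apply (BUC_contC n Om alpha); auto. }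
    intros y Hy. rewrite phibar_min. rewrite Rmin_right by lra. rewrite <- (Rmin_left 0 0) by lra.
    rewrite <- phibar_min. eapply Rle_trans; [apply Hcb; auto|]. rewrite Rabs_R0, Rmult_0_r, exp_0. lra. }
  assert (Hkd : forall s x, Om x -> Rabs (kf f (fst q) s x - kf f (fst p) s x) <= L * (c * exp (alpha * Rabs s))).
  { intros s x Hx. unfold kf. apply HL; auto; try apply (BUC_contC n Om alpha); auto.
    intros y Hy. apply (distP_curve q p c Hd s y Hy). }
  assert (HAB : forall x, Om x -> snd q x < Phi (fst q) T x /\ Phi (fst q) (- T') x < snd q x).
  { intros x Hx.
    assert (Hdx : Rabs (snd q x - snd p x) <= c) by (apply (proj2 Hd); auto).
    assert (c0 : 0 <= c) by (pose proof (Rabs_pos (snd q x - snd p x)); lra).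
    pose proof (absle _ _ Hdx) as Hdx'.
    split.
    - pose proof (Phi_diff q p c T x L HBq HBp Hx Hkd T ltac:(rewrite Rabs_right; lra)) as PD.
      pose proof (absle _ _ PD). pose proof (HUT x Hx).
      assert (T * (L * (c * exp (alpha * T))) = c * (K - 1)) by (unfold K; ring).
      assert (c * (K - 1) + c = c * K) by ring. lra.
    - assert (m0 * (0 - - T') <= Phi (fst q) 0 x - Phi (fst q) (- T') x).
      { apply Phi_rate; auto; try lra. intros s Hs. apply Hk0; auto; lra. }
      rewrite Phi_zero in H. pose proof (HBd x Hx). pose proof (absle _ _ H0). lra. }
  split; [|split; [auto|split; [auto|split; [auto|]]]].
  - split; [split; auto|]. intros x Hx _. exists T. split; [lra|].
    rewrite Rint_Phi by (auto; lra). apply HAB; auto.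
  - intros x Hx. destruct (HAB x Hx) as [A B].
    destruct (IVT (fun t => Phi (fst q) t x - snd q x) (- T') T (Phi_cont_shift _ _ _ HBq Hx)) as [z [Hz Hz']];
      try lra.
    assert (E : Phi (fst q) (tauhat f q x) x = snd q x).
    { apply tauhat_Phi; auto. exists z. lra. }
    split; auto.
    assert (tauhat f q x <= T).
    { apply Rnot_lt_le. intro Hlt. assert (Phi (fst q) T x <= Phi (fst q) (tauhat f q x) x) by (apply Phi_mono; auto; lra). lra. }
    assert (- T' <= tauhat f q x).
    { apply Rnot_lt_le. intro Hlt. assert (Phi (fst q) (tauhat f q x) x <= Phi (fst q) (- T') x) by (apply Phi_mono; auto; lra). lra. }
    apply Rabs_le. unfold Sb. lra.
Qed.

Lemma pack (p : prodX n) : Dtau Om alpha f p -> exists Sb m d0 C L K1,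
  1 <= Sb /\ 0 < m /\ 0 < d0 /\ d0 <= 1 /\ 0 <= C /\ 0 <= L /\ 0 <= K1 /\
  forall q c, memP Om alpha q -> distP q p c -> c < d0 ->
   Dtau Om alpha f q /\
   (forall s x, Om x -> Rabs (phibar (fst q) s x) <= C * exp (alpha * Rabs s)) /\
   (forall s x, Rabs s <= Sb -> Om x -> m <= kf f (fst q) s x) /\
   (forall s x, Om x -> Rabs (kf f (fst q) s x - kf f (fst p) s x) <= L * (c * exp (alpha * Rabs s))) /\
   (forall x, Om x -> Phi (fst q) (tauhat f q x) x = snd q x /\ Rabs (tauhat f q x) <= Sb - 1) /\
   (forall x, Om x -> Rabs (tauhat f q x - tauhat f p x) <= K1 * c).
Proof.
  intros HD. destruct (prepack p HD) as [Sb [m [d0 [C [L [H1 [H2 [H3 [H4 [H5 [H6 H]]]]]]]]]]].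
  set (K1 := (1 + Sb * (L * exp (alpha * Sb))) / m).
  assert (HK1 : 0 <= K1).
  { unfold K1. apply Rmult_le_pos; [|left; apply Rinv_0_lt_compat; auto].
    assert (0 <= Sb * (L * exp (alpha * Sb))); [|lra].
    apply Rmult_le_pos; [lra|]. apply Rmult_le_pos; [lra|left; apply exp_pos]. }
  exists Sb, m, d0, C, L, K1. do 7 (split; [auto|]).
  pose proof HD as [Hmp _].
  destruct (H p 0 Hmp (distP_refl p) H3) as [_ [_ [_ [_ Hp]]]].
  intros q c Hq Hd Hc.
  destruct (H q c Hq Hd Hc) as [A1 [A2 [A3 [A4 A5]]]].
  do 5 (split; [auto|]).
  intros x Hx. destruct Hq as [HBq _]. destruct Hmp as [HBp _].
  destruct (A5 x Hx) as [Eq Bq]. destruct (Hp x Hx) as [Ep Bp].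
  assert (Hdx : Rabs (snd q x - snd p x) <= c) by (apply (proj2 Hd); auto).
  pose proof (Phi_rate_abs (fst q) (tauhat f p x) (tauhat f q x) x m Sb HBq Hx ltac:(lra) ltac:(lra)
     (fun s Hs => A3 s x Hs Hx)) as R.
  rewrite Eq in R.
  pose proof (Phi_diff q p c (tauhat f p x) x L HBq HBp Hx A4 Sb ltac:(lra)) as PD.
  rewrite Ep in PD.
  assert (Rabs (snd q x - Phi (fst q) (tauhat f p x) x) <= c + Sb * (L * (c * exp (alpha * Sb)))).
  { replace (snd q x - Phi (fst q) (tauhat f p x) x) with ((snd q x - snd p x) - (Phi (fst q) (tauhat f p x) x - snd p x)) by ring.
    unfold Rminus at 1. eapply Rle_trans; [apply Rabs_triang|]. rewrite Rabs_Ropp. lra. }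
  assert (m * Rabs (tauhat f q x - tauhat f p x) <= c * (1 + Sb * (L * exp (alpha * Sb)))).
  { eapply Rle_trans; [apply R|]. eapply Rle_trans; [apply H0|]. right; ring. }
  apply (Rmult_le_reg_l m); auto. eapply Rle_trans; [apply H7|]. right. unfold K1. field. lra.
Qed.

Variable Df : (pt n -> R) -> (pt n -> R) -> (pt n -> R).
Hypothesis HDf : C1_map Om (contC Om) (supC_le Om) addF scalF (contC Om) f Df.

Lemma Dc : forall g h, contC Om g -> contC Om h -> contC Om (Df g h).
Proof. destruct HDf as [_ [H _]]. intros; apply H; auto. Qed.

Lemma Dlin : forall g h1 h2 a b, contC Om g -> contC Om h1 -> contC Om h2 -> forall x, Om x ->
  Df g (fun y => a * h1 y + b * h2 y) x = a * Df g h1 x + b * Df g h2 x.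
Proof. destruct HDf as [_ [_ [H _]]]. intros. apply (H g); auto. Qed.

Lemma Dscal : forall g h a, contC Om g -> contC Om h -> forall x, Om x ->
  Df g (fun y => a * h y) x = a * Df g h x.
Proof.
  intros g h a Hg Hh x Hx.
  replace (fun y => a * h y) with (fun y => a * h y + 0 * h y) by (apply functional_extensionality; intro; ring).
  rewrite Dlin; auto. ring.
Qed.

Lemma Dminus : forall g h1 h2, contC Om g -> contC Om h1 -> contC Om h2 -> forall x, Om x ->
  Df g (fun y => h1 y - h2 y) x = Df g h1 x - Df g h2 x.
Proof.
  intros g h1 h2 Hg H1 H2 x Hx.
  replace (fun y => h1 y - h2 y) with (fun y => 1 * h1 y + (-1) * h2 y) by (apply functional_extensionality; intro; ring).
  rewrite Dlin; auto. ring.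
Qed.

Lemma Dbd : forall g, contC Om g -> exists K, 0 <= K /\ forall h c, contC Om h ->
  (forall y, Om y -> Rabs (h y) <= c) -> forall x, Om x -> Rabs (Df g h x) <= K * c.
Proof.
  destruct HDf as [_ [_ [_ [H _]]]]. intros g Hg. destruct (H g Hg) as [K HK].
  exists (Rmax K 0). split; [apply Rmax_r|]. intros h c Hh Hc x Hx.
  assert (0 <= c) by (pose proof (Hc x Hx); pose proof (Rabs_pos (h x)); lra).
  eapply Rle_trans; [apply (HK h c Hh Hc x Hx)|]. apply Rmult_le_compat_r; auto. apply Rmax_l.
Qed.

Lemma Dfr : forall g, contC Om g -> forall eps, 0 < eps -> exists d, 0 < d /\
  forall h c, contC Om h -> (forall y, Om y -> Rabs (h y) <= c) -> c < d ->
  forall x, Om x -> Rabs (f (fun y => g y + h y) x - f g x - Df g h x) <= eps * c.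
Proof.
  destruct HDf as [_ [_ [_ [_ [H _]]]]]. intros g Hg eps He. destruct (H g Hg eps He) as [d [Hd Hd']].
  exists d; split; auto. intros h c Hh Hc Hcd x Hx. apply (Hd' h c Hh); auto.
  apply contC_plus; auto.
Qed.

Lemma Dcont : forall g, contC Om g -> forall eps, 0 < eps -> exists d, 0 < d /\
  forall k, contC Om k -> (forall y, Om y -> Rabs (k y - g y) <= d / 2) ->
  forall h c, contC Om h -> (forall y, Om y -> Rabs (h y) <= c) ->
  forall x, Om x -> Rabs (Df k h x - Df g h x) <= eps * c.
Proof.
  destruct HDf as [_ [_ [_ [_ [_ H]]]]]. intros g Hg eps He. destruct (H g Hg eps He) as [d [Hd Hd']].
  exists d; split; auto. intros k Hk Hkg h c Hh Hc x Hx. apply (Hd' k Hk); auto.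
  exists (d / 2). split; [lra|]. intros y Hy. unfold addF, scalF.
  replace (k y + -1 * g y) with (k y - g y) by ring. auto.
Qed.

Lemma Dunif G : UCs Om G -> (forall s, contC Om (G s)) -> forall Sb eps, 0 < eps -> exists d, 0 < d /\
  forall s, Rabs s <= Sb -> forall k, contC Om k -> (forall y, Om y -> Rabs (k y - G s y) <= d) ->
  forall h c, contC Om h -> (forall y, Om y -> Rabs (h y) <= c) ->
  forall x, Om x -> Rabs (Df k h x - Df (G s) h x) <= eps * c.
Proof.
  intros HU HG Sb eps He. apply NNPP. intro Hn.
  assert (HP : forall N : nat, exists s, - Sb <= s <= Sb /\ exists k h c x, contC Om k /\
     (forall y, Om y -> Rabs (k y - G s y) <= / INR (S N)) /\ contC Om h /\
     (forall y, Om y -> Rabs (h y) <= c) /\ Om x /\ eps * c < Rabs (Df k h x - Df (G s) h x)).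
  { intro N. apply NNPP. intro H2. apply Hn. exists (/ INR (S N)). split; [apply invS_pos|].
    intros s Hs k Hk Hkd h c Hh Hc x Hx. apply Rnot_lt_le. intro H3. apply H2. exists s.
    split; [now apply absle|]. exists k, h, c, x. repeat split; auto. }
  destruct (int_cluster _ _ _ HP) as [ss [Hss Hcl]].
  destruct (Dcont (G ss) (HG ss) (eps / 2)) as [d [Hd Hd']]; [lra|].
  destruct (HU Sb (d / 4)) as [d1 [Hd1 Hd1']]; [lra|].
  destruct (inv_small (d / 4)) as [N0 HN0]; [lra|].
  destruct (Hcl d1 Hd1 N0) as [N [s [HN [Hs [[k [h [c [x [Hk [Hkd [Hh [Hc [Hx Hgt]]]]]]]]] Hds]]]]].
  assert (Hs' : Rabs s <= Sb) by (apply Rabs_le; lra).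
  assert (Hss' : Rabs ss <= Sb) by (apply Rabs_le; lra).
  assert (HGs : forall y, Om y -> Rabs (G s y - G ss y) <= d / 2).
  { intros y Hy. pose proof (Hd1' s ss Hs' Hss' Hds y Hy). lra. }
  assert (Hkss : forall y, Om y -> Rabs (k y - G ss y) <= d / 2).
  { intros y Hy. pose proof (Hkd y Hy). pose proof (HN0 N HN). pose proof (Hd1' s ss Hs' Hss' Hds y Hy).
    replace (k y - G ss y) with ((k y - G s y) + (G s y - G ss y)) by ring.
    eapply Rle_trans; [apply Rabs_triang|]. lra. }
  pose proof (Hd' k Hk Hkss h c Hh Hc x Hx) as A.
  pose proof (Hd' (G s) (HG s) HGs h c Hh Hc x Hx) as B.
  replace (Df k h x - Df (G s) h x) with ((Df k h x - Df (G ss) h x) - (Df (G s) h x - Df (G ss) h x)) in Hgt by ring.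
  unfold Rminus at 1 in Hgt. pose proof (Rabs_triang (Df k h x - Df (G ss) h x) (- (Df (G s) h x - Df (G ss) h x))).
  rewrite Rabs_Ropp in H. lra.
Qed.

Lemma Dubd G : UCs Om G -> (forall s, contC Om (G s)) -> forall Sb, exists K, 0 <= K /\
  forall s, Rabs s <= Sb -> forall h c, contC Om h -> (forall y, Om y -> Rabs (h y) <= c) ->
  forall x, Om x -> Rabs (Df (G s) h x) <= K * c.
Proof.
  intros HU HG Sb. apply NNPP. intro Hn.
  assert (HP : forall N : nat, exists s, - Sb <= s <= Sb /\ exists h c x, contC Om h /\
     (forall y, Om y -> Rabs (h y) <= c) /\ Om x /\ INR N * c < Rabs (Df (G s) h x)).
  { intro N. apply NNPP. intro H2. apply Hn. exists (INR N). split; [apply pos_INR|].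
    intros s Hs h c Hh Hc x Hx. apply Rnot_lt_le. intro H3. apply H2. exists s.
    split; [now apply absle|]. exists h, c, x. repeat split; auto. }
  destruct (int_cluster _ _ _ HP) as [ss [Hss Hcl]].
  destruct (Dunif G HU HG Sb 1) as [d [Hd Hd']]; [lra|].
  destruct (Dbd (G ss) (HG ss)) as [K0 [HK0 HK0']].
  destruct (HU Sb d) as [d1 [Hd1 Hd1']]; auto.
  destruct (INR_big (K0 + 1)) as [N0 HN0].
  destruct (Hcl d1 Hd1 N0) as [N [s [HN [Hs [[h [c [x [Hh [Hc [Hx Hgt]]]]]] Hds]]]]].
  assert (Hs' : Rabs s <= Sb) by (apply Rabs_le; lra).
  assert (Hss' : Rabs ss <= Sb) by (apply Rabs_le; lra).
  assert (c0 : 0 <= c) by (pose proof (Hc x Hx); pose proof (Rabs_pos (h x)); lra).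
  pose proof (Hd' ss Hss' (G s) (HG s) (fun y Hy => Hd1' s ss Hs' Hss' Hds y Hy) h c Hh Hc x Hx) as A.
  pose proof (HK0' h c Hh Hc x Hx) as B.
  assert (INR N0 <= INR N) by (apply le_INR; auto).
  pose proof (Rabs_triang_inv (Df (G s) h x) (Df (G ss) h x)).
  assert ((K0 + 1) * c <= INR N * c) by (apply Rmult_le_compat_r; lra).
  lra.
Qed.

Lemma Dderiv g k x t0 : contC Om g -> contC Om k -> Om x ->
  derivable_pt_lim (fun t => f (fun y => g y + t * k y) x) t0 (Df (fun y => g y + t0 * k y) k x).
Proof.
  intros Hg Hk Hx.
  set (gt := fun y => g y + t0 * k y).
  assert (Hgt : contC Om gt) by (apply contC_plus; [auto| apply contC_scal; auto]).
  destruct (contC_bounded Om k HC Hk) as [B [HB0 HB]].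
  intros eps He.
  destruct (Dfr gt Hgt (eps / (B + 1))) as [d [Hd Hd']]; [apply Rdiv_lt_0_compat; lra|].
  assert (Hdp : 0 < d / (B + 1)) by (apply Rdiv_lt_0_compat; lra).
  exists (mkposreal _ Hdp). intros e He0 Hed. simpl in Hed.
  set (h := fun y => e * k y).
  assert (Hh : contC Om h) by (apply contC_scal; auto).
  assert (Hhb : forall y, Om y -> Rabs (h y) <= Rabs e * B).
  { intros y Hy. unfold h. rewrite Rabs_mult. apply Rmult_le_compat_l; [apply Rabs_pos| auto]. }
  assert (Hlt : Rabs e * B < d).
  { apply Rle_lt_trans with (Rabs e * (B + 1)). { apply Rmult_le_compat_l; [apply Rabs_pos|lra]. }
    apply (Rmult_lt_compat_r (B + 1)) in Hed; [|lra]. replace (d / (B + 1) * (B + 1)) with d in Hed by (field; lra). lra. }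
  pose proof (Hd' h (Rabs e * B) Hh Hhb Hlt x Hx) as R.
  replace (fun y => gt y + h y) with (fun y => g y + (t0 + e) * k y) in R
    by (apply functional_extensionality; intro y; unfold gt, h; ring).
  unfold h in R. rewrite Dscal in R by auto. fold gt. simpl. fold gt.
  match goal with |- Rabs ?A < _ => replace A with ((f (fun y => g y + (t0 + e) * k y) x - f gt x - e * Df gt k x) / e)
    by (unfold gt; field; auto) end.
  unfold Rdiv. rewrite Rabs_mult, Rabs_inv.
  assert (Hae : 0 < Rabs e) by (apply Rabs_pos_lt; auto).
  apply Rle_lt_trans with (eps / (B + 1) * (Rabs e * B) * / Rabs e).
  { apply Rmult_le_compat_r; [left; apply Rinv_0_lt_compat; auto| auto]. }
  replace (eps / (B + 1) * (Rabs e * B) * / Rabs e) with (eps * (B / (B + 1))) by (field; lra).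
  replace eps with (eps * 1) at 2 by ring. apply Rmult_lt_compat_l; auto.
  apply (Rmult_lt_reg_r (B + 1)); [lra|]. field_simplify; lra.
Qed.

Lemma Dfr_unif G : UCs Om G -> (forall s, contC Om (G s)) -> forall Sb eps, 0 < eps -> exists d, 0 < d /\
  forall s, Rabs s <= Sb -> forall k c, contC Om k -> (forall y, Om y -> Rabs (k y) <= c) -> c <= d ->
  forall x, Om x -> Rabs (f (fun y => G s y + k y) x - f (G s) x - Df (G s) k x) <= eps * c.
Proof.
  intros HU HG Sb eps He. destruct (Dunif G HU HG Sb eps He) as [d [Hd Hd']].
  exists d; split; auto. intros s Hs k c Hk Hc Hcd x Hx.
  set (u := fun t => f (fun y => G s y + t * k y) x).
  destruct (MVT_gen u 0 1 (fun t => Df (fun y => G s y + t * k y) k x)) as [th [Hth E]].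
  - intros t _. apply is_derive_Reals. apply Dderiv; auto.
  - intros t _. apply derivable_continuous_pt. exists (Df (fun y => G s y + t * k y) k x). apply Dderiv; auto.
  - rewrite Rmin_left, Rmax_right in Hth by lra.
    assert (U1 : u 1 = f (fun y => G s y + k y) x).
    { unfold u. f_equal. apply functional_extensionality; intro; ring. }
    assert (U0 : u 0 = f (G s) x).
    { unfold u. f_equal. apply functional_extensionality; intro; ring. }
    rewrite <- U1, <- U0, E, Rminus_0_r, Rmult_1_r.
    apply (Hd' s Hs); auto.
    + apply contC_plus; [auto| apply contC_scal; auto].
    + intros y Hy. replace (G s y + th * k y - G s y) with (th * k y) by ring.
      rewrite Rabs_mult. rewrite (Rabs_right th) by lra.
      apply Rle_trans with (1 * c); [|lra]. apply Rmult_le_compat; try lra; try apply Rabs_pos; auto.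
Qed.

Definition wD (phi psi : R -> pt n -> R) (s : R) (x : pt n) : R :=
  Df (phibar phi s) (phibar psi s) x.

Lemma wD_contC phi psi : BUC Om alpha phi -> BUC Om alpha psi -> forall s, contC Om (wD phi psi s).
Proof. intros H1 H2 s. unfold wD. apply Dc; apply (BUC_contC n Om alpha); auto. Qed.

Lemma wD_UC phi psi : BUC Om alpha phi -> BUC Om alpha psi -> UCs Om (wD phi psi).
Proof.
  intros Hp Hs. pose proof (BUC_UC n Om alpha Ha _ Hp) as UG. pose proof (BUC_UC n Om alpha Ha _ Hs) as UH.
  pose proof (BUC_contC n Om alpha _ Hp) as CG. pose proof (BUC_contC n Om alpha _ Hs) as CH.
  intros Sb eps He.
  destruct (Dubd _ UG CG Sb) as [K [HK0 HK]].
  destruct (BUC_bound n Om alpha Ha _ Hs) as [CH0 [HCH0 HCHb]].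
  set (BH := CH0 * exp (alpha * Sb)).
  assert (HBH : 0 <= BH) by (unfold BH; apply Rmult_le_pos; [lra| left; apply exp_pos]).
  destruct (Dunif _ UG CG Sb (eps / (2 * (BH + 1)))) as [d2 [Hd2 Hd2']]; [apply Rdiv_lt_0_compat; lra|].
  destruct (UH Sb (eps / (2 * (K + 1)))) as [d1 [Hd1 Hd1']]; [apply Rdiv_lt_0_compat; lra|].
  destruct (UG Sb d2 Hd2) as [d3 [Hd3 Hd3']].
  exists (Rmin d1 d3). split; [apply Rmin_glb_lt; auto|].
  intros s t Hs' Ht' Hst x Hx. unfold wD.
  assert (Hst1 : Rabs (s - t) < d1) by (pose proof (Rmin_l d1 d3); lra).
  assert (Hst3 : Rabs (s - t) < d3) by (pose proof (Rmin_r d1 d3); lra).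
  replace (Df (phibar phi s) (phibar psi s) x - Df (phibar phi t) (phibar psi t) x) with
    (Df (phibar phi s) (fun y => phibar psi s y - phibar psi t y) x +
     (Df (phibar phi s) (phibar psi t) x - Df (phibar phi t) (phibar psi t) x))
    by (rewrite Dminus by auto; ring).
  eapply Rle_trans; [apply Rabs_triang|].
  assert (A1 : Rabs (Df (phibar phi s) (fun y => phibar psi s y - phibar psi t y) x) <= K * (eps / (2 * (K + 1)))).
  { apply (HK s Hs'); auto. apply contC_minus; auto. }
  assert (A2 : Rabs (Df (phibar phi s) (phibar psi t) x - Df (phibar phi t) (phibar psi t) x) <= eps / (2 * (BH + 1)) * BH).
  { apply (Hd2' t Ht' (phibar phi s) (CG s) ltac:(intros y Hy; apply Hd3'; auto) (phibar psi t) BH (CH t)); auto.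
    intros y Hy. eapply Rle_trans; [apply HCHb; auto|]. unfold BH. apply Rmult_le_compat_l; auto.
      apply exp_le. apply Rmult_le_compat_l; auto. }
  assert (B1 : K * (eps / (2 * (K + 1))) <= eps / 2).
  { replace (K * (eps / (2 * (K + 1)))) with (eps / 2 - eps / (2 * (K + 1))) by (field; lra).
    assert (0 < eps / (2 * (K + 1))) by (apply Rdiv_lt_0_compat; lra). lra. }
  assert (B2 : eps / (2 * (BH + 1)) * BH <= eps / 2).
  { replace (eps / (2 * (BH + 1)) * BH) with (eps / 2 - eps / (2 * (BH + 1))) by (field; lra).
    assert (0 < eps / (2 * (BH + 1))) by (apply Rdiv_lt_0_compat; lra). lra. }
  lra.
Qed.

Lemma contC_comp w sg Sb : UCs Om w -> (forall s, contC Om (w s)) -> contC Om sg ->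
  (forall x, Om x -> Rabs (sg x) <= Sb) -> contC Om (fun x => w (sg x) x).
Proof.
  intros HU Hc Hs Hb x0 Hx0 eps He.
  destruct (equicont n Om w HU Hc Sb x0 Hx0 (eps / 3)) as [r1 [Hr1 H1]]; [lra|].
  destruct (HU Sb (eps / 3)) as [d [Hd H2]]; [lra|].
  destruct (Hs x0 Hx0 d Hd) as [r2 [Hr2 H3]].
  exists (Rmin r1 r2). split; [apply Rmin_glb_lt; auto|]. intros x Hx Hn.
  assert (N1 : near x0 x r1) by (apply (near_mono _ _ _ _ Hn); apply Rmin_l).
  assert (N2 : near x0 x r2) by (apply (near_mono _ _ _ _ Hn); apply Rmin_r).
  specialize (H3 x Hx N2).
  pose proof (H1 x Hx N1 (sg x) (Hb x Hx)) as A.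
  pose proof (H2 (sg x0) (sg x) (Hb x0 Hx0) (Hb x Hx) H3 x0 Hx0) as B.
  replace (w (sg x0) x0 - w (sg x) x) with ((w (sg x0) x0 - w (sg x) x0) - (w (sg x) x - w (sg x) x0)) by ring.
  unfold Rminus at 1. eapply Rle_lt_trans; [apply Rabs_triang|]. rewrite Rabs_Ropp. lra.
Qed.

Lemma contC_div g h m : contC Om g -> contC Om h -> 0 < m -> (forall x, Om x -> m <= h x) ->
  contC Om (fun x => g x / h x).
Proof.
  intros Hg Hh Hm Hhm x0 Hx0 eps He.
  set (A := Rabs (g x0) + 1).
  assert (HA : 1 <= A) by (unfold A; pose proof (Rabs_pos (g x0)); lra).
  set (e1 := eps * m * m / (2 * (Rabs (h x0) + 1))).
  set (e2 := eps * m * m / (2 * A)).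
  assert (He1 : 0 < e1) by (unfold e1; apply Rdiv_lt_0_compat; [apply Rmult_lt_0_compat; [apply Rmult_lt_0_compat|]; lra| pose proof (Rabs_pos (h x0)); lra]).
  assert (He2 : 0 < e2) by (unfold e2; apply Rdiv_lt_0_compat; [apply Rmult_lt_0_compat; [apply Rmult_lt_0_compat|]; lra| lra]).
  destruct (Hg x0 Hx0 e1 He1) as [r1 [Hr1 H1]].
  destruct (Hh x0 Hx0 e2 He2) as [r2 [Hr2 H2]].
  exists (Rmin r1 r2). split; [apply Rmin_glb_lt; auto|]. intros x Hx Hn.
  assert (N1 : near x0 x r1) by (apply (near_mono _ _ _ _ Hn); apply Rmin_l).
  assert (N2 : near x0 x r2) by (apply (near_mono _ _ _ _ Hn); apply Rmin_r).
  specialize (H1 x Hx N1). specialize (H2 x Hx N2).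
  pose proof (Hhm x Hx). pose proof (Hhm x0 Hx0).
  replace (g x0 / h x0 - g x / h x) with (((g x0 - g x) * h x0 + g x0 * (h x - h x0)) / (h x0 * h x)) by (field; lra).
  unfold Rdiv. rewrite Rabs_mult. rewrite Rabs_inv. rewrite Rabs_mult. rewrite (Rabs_right (h x0)) by lra.
  rewrite (Rabs_right (h x)) by lra.
  assert (Hmm : m * m <= h x0 * h x) by (apply Rmult_le_compat; lra).
  assert (N : Rabs ((g x0 - g x) * h x0 + g x0 * (h x - h x0)) < eps * m * m).
  { eapply Rle_lt_trans; [apply Rabs_triang|]. rewrite !Rabs_mult. rewrite (Rabs_right (h x0)) by lra.
    assert (B1 : Rabs (g x0 - g x) * h x0 < e1 * (Rabs (h x0) + 1)).
    { rewrite (Rabs_right (h x0)) by lra. apply Rle_lt_trans with (Rabs (g x0 - g x) * (h x0 + 1)).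
      - apply Rmult_le_compat_l; [apply Rabs_pos|lra].
      - apply Rmult_lt_compat_r; lra. }
    assert (B2 : Rabs (g x0) * Rabs (h x - h x0) <= A * e2).
    { rewrite Rabs_minus_sym. apply Rmult_le_compat; try apply Rabs_pos; unfold A; lra. }
    assert (E1 : e1 * (Rabs (h x0) + 1) = eps * m * m / 2) by (unfold e1; field; pose proof (Rabs_pos (h x0)); lra).
    assert (E2 : A * e2 = eps * m * m / 2) by (unfold e2; field; lra).
    assert (0 < eps * m * m) by (apply Rmult_lt_0_compat; [apply Rmult_lt_0_compat|]; lra).
    lra. }
  apply Rle_lt_trans with (Rabs ((g x0 - g x) * h x0 + g x0 * (h x - h x0)) * / (m * m)).
  { apply Rmult_le_compat_l; [apply Rabs_pos|]. apply Rinv_le_contravar; auto. apply Rmult_lt_0_compat; lra. }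
  apply (Rmult_lt_reg_r (m * m)); [apply Rmult_lt_0_compat; lra|].
  rewrite Rmult_assoc, Rinv_l by (apply Rmult_integral_contrapositive; split; lra). lra.
Qed.

Lemma tau_cont (p : prodX n) : Dtau Om alpha f p -> contC Om (tauhat f p).
Proof.
  intros HD. destruct (pack p HD) as [Sb [m [d0 [C [L [K1 [H1 [H2 [H3 [H4 [H5 [H6 [H7 H]]]]]]]]]]]]].
  pose proof HD as [[HBp Hdp] _].
  destruct (H p 0 (proj1 HD) (distP_refl p) H3) as [_ [_ [Hkl [_ [Hp _]]]]].
  intros x0 Hx0 eps He.
  destruct (Hp x0 Hx0) as [E0 B0].
  set (t0 := tauhat f p x0) in *.
  assert (Hc : contC Om (fun x => snd p x - Phi (fst p) t0 x)).
  { apply contC_minus; auto.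
    apply (contC_ext Om (fun x => RInt (fun s => kf f (fst p) s x) (- (fun _ => t0) x) 0)).
    - apply (param_cont n Om _ _ Sb Mf); auto.
      + intro s. apply Hfc. apply (BUC_contC n Om alpha); auto.
      + intros s x _ Hx. pose proof (kpos _ HBp s x Hx). rewrite Rabs_right; lra.
      + intros x _. cbv beta. lra.
      + apply contC_const.
    - intros; reflexivity. }
  destruct (Hc x0 Hx0 (m * eps)) as [r [Hr Hr']]; [apply Rmult_lt_0_compat; lra|].
  exists r; split; auto. intros x Hx Hn. specialize (Hr' x Hx Hn).
  destruct (Hp x Hx) as [E1 B1].
  pose proof (Phi_rate_abs (fst p) t0 (tauhat f p x) x m Sb HBp Hx ltac:(lra) ltac:(lra)
     (fun s Hs => Hkl s x Hs Hx)) as R.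
  rewrite E1 in R.
  replace (snd p x0 - Phi (fst p) t0 x0 - (snd p x - Phi (fst p) t0 x)) with (- (snd p x - Phi (fst p) t0 x)) in Hr'
    by (rewrite E0; ring).
  rewrite Rabs_Ropp in Hr'. rewrite Rabs_minus_sym.
  apply (Rmult_lt_reg_l m); auto. lra.
Qed.

Definition DTm (p h : prodX n) (x : pt n) : R :=
  (snd h x - RInt (fun s => wD (fst p) (fst h) s x) (- tauhat f p x) 0) / kf f (fst p) (- tauhat f p x) x.

Lemma wD_lin phi (h1 h2 : prodX n) a b s x : BUC Om alpha phi -> BUC Om alpha (fst h1) -> BUC Om alpha (fst h2) -> Om x ->
  wD phi (fst (addP (scalP a h1) (scalP b h2))) s x = a * wD phi (fst h1) s x + b * wD phi (fst h2) s x.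
Proof.
  intros Hp H1 H2 Hx. unfold wD. 
  pose proof (BUC_contC n Om alpha _ Hp s) as C0.
  pose proof (BUC_contC n Om alpha _ H1 s) as C1.
  pose proof (BUC_contC n Om alpha _ H2 s) as C2.
  rewrite <- (Dlin _ _ _ a b C0 C1 C2 x Hx). f_equal.
  rewrite !phibar_min. simpl. reflexivity.
Qed.

Lemma wD_bound phi : BUC Om alpha phi -> forall Sb, exists K, 0 <= K /\
  forall psi c, BUC Om alpha psi -> supBUC_le Om alpha psi c ->
  forall s x, Rabs s <= Sb -> Om x -> Rabs (wD phi psi s x) <= K * (c * exp (alpha * Sb)).
Proof.
  intros Hp Sb. destruct (Dubd _ (BUC_UC n Om alpha Ha _ Hp) (BUC_contC n Om alpha _ Hp) Sb) as [K [HK0 HK]].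
  exists K; split; auto. intros psi c Hs Hc s x Hsb Hx. unfold wD.
  apply (HK s Hsb); auto. { apply (BUC_contC n Om alpha); auto. }
  intros y Hy. eapply Rle_trans; [apply (supBUC_phibar n Om alpha Ha _ c Hc s y Hy)|].
  assert (0 <= c).
  { pose proof (Hc 0 y ltac:(lra) Hy). rewrite Rabs_R0, Rmult_0_r, exp_0, Rmult_1_l in H. 
    pose proof (Rabs_pos (psi 0 y)). lra. }
  apply Rmult_le_compat_l; auto. apply exp_le. apply Rmult_le_compat_l; auto.
Qed.

Lemma DT_cont (p h : prodX n) : Dtau Om alpha f p -> memP Om alpha h -> contC Om (DTm p h).
Proof.
  intros HD [HBh Hdh]. destruct (pack p HD) as [Sb [m [d0 [C [L [K1 [H1 [H2 [H3 [H4 [H5 [H6 [H7 H]]]]]]]]]]]]].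
  pose proof HD as [[HBp Hdp] _].
  destruct (H p 0 (proj1 HD) (distP_refl p) H3) as [_ [_ [Hkl [_ [Hp _]]]]].
  pose proof (tau_cont p HD) as Htc.
  destruct (wD_bound (fst p) HBp Sb) as [K [HK0 HK]].
  pose proof HBh as [_ [[ch Hch] _]].
  apply (contC_div _ _ m); auto.
  - apply contC_minus; auto.
    apply (param_cont n Om _ _ Sb (K * (ch * exp (alpha * Sb)))); auto.
    + apply wD_UC; auto.
    + apply wD_contC; auto.
    + intros x Hx. destruct (Hp x Hx); lra.
  - apply (contC_comp (kf f (fst p)) (fun x => - tauhat f p x) Sb); auto.
    + intro s. apply Hfc. apply (BUC_contC n Om alpha); auto.
    + apply (contC_ext Om (fun x => (-1) * tauhat f p x)); [apply contC_scal; auto| intros; ring].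
    + intros x Hx. rewrite Rabs_Ropp. destruct (Hp x Hx); lra.
  - intros x Hx. apply Hkl; auto. rewrite Rabs_Ropp. destruct (Hp x Hx); lra.
Qed.

Lemma DT_lin (p h1 h2 : prodX n) a b : Dtau Om alpha f p -> memP Om alpha h1 -> memP Om alpha h2 ->
  forall x, Om x -> DTm p (addP (scalP a h1) (scalP b h2)) x = a * DTm p h1 x + b * DTm p h2 x.
Proof.
  intros HD [HB1 _] [HB2 _] x Hx. pose proof HD as [[HBp _] _].
  unfold DTm.
  assert (E : RInt (fun s => wD (fst p) (fst (addP (scalP a h1) (scalP b h2))) s x) (- tauhat f p x) 0 =
     a * RInt (fun s => wD (fst p) (fst h1) s x) (- tauhat f p x) 0 + b * RInt (fun s => wD (fst p) (fst h2) s x) (- tauhat f p x) 0).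
  { rewrite <- RI_lin.
    - apply RInt_ext. intros t _. apply wD_lin; auto.
    - apply (UCs_RInt Om); auto. apply wD_UC; auto.
    - apply (UCs_RInt Om); auto. apply wD_UC; auto. }
  rewrite E. 
  replace (snd (addP (scalP a h1) (scalP b h2)) x) with (a * snd h1 x + b * snd h2 x) by reflexivity.
  pose proof (kpos _ HBp (- tauhat f p x) x Hx). field. lra.
Qed.

Lemma normP_parts (h : prodX n) c : normP_le Om alpha h c ->
  (forall s y, Om y -> Rabs (phibar (fst h) s y) <= c * exp (alpha * Rabs s)) /\ (forall y, Om y -> Rabs (snd h y) <= c).
Proof. intros [A B]. split; [apply (supBUC_phibar n Om alpha Ha); auto| exact B]. Qed.

Lemma DT_bd (p : prodX n) : Dtau Om alpha f p -> exists K, forall h c, memP Om alpha h -> normP_le Om alpha h c ->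
  forall x, Om x -> Rabs (DTm p h x) <= K * c.
Proof.
  intros HD. destruct (pack p HD) as [Sb [m [d0 [C [L [K1 [H1 [H2 [H3 [H4 [H5 [H6 [H7 H]]]]]]]]]]]]].
  pose proof HD as [[HBp Hdp] _].
  destruct (H p 0 (proj1 HD) (distP_refl p) H3) as [_ [_ [Hkl [_ [Hp _]]]]].
  destruct (wD_bound (fst p) HBp Sb) as [K [HK0 HK]].
  exists ((1 + Sb * (K * exp (alpha * Sb))) / m).
  intros h c [HBh Hdh] Hn x Hx. pose proof Hn as [Hn1 Hn2].
  assert (c0 : 0 <= c) by (pose proof (Hn2 x Hx); pose proof (Rabs_pos (snd h x)); lra).
  destruct (Hp x Hx) as [_ Bx].
  assert (Hk : m <= kf f (fst p) (- tauhat f p x) x) by (apply Hkl; auto; rewrite Rabs_Ropp; lra).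
  unfold DTm. unfold Rdiv. rewrite Rabs_mult. rewrite Rabs_inv. rewrite (Rabs_right (kf _ _ _ _)) by lra.
  assert (N : Rabs (snd h x - RInt (fun s => wD (fst p) (fst h) s x) (- tauhat f p x) 0) <= c * (1 + Sb * (K * exp (alpha * Sb)))).
  { unfold Rminus. eapply Rle_trans; [apply Rabs_triang|]. rewrite Rabs_Ropp.
    assert (A : Rabs (RInt (fun s => wD (fst p) (fst h) s x) (- tauhat f p x) 0) <= Rabs (0 - - tauhat f p x) * (K * (c * exp (alpha * Sb)))).
    { apply RI_abs. { apply (UCs_RInt Om); auto. apply wD_UC; auto. }
      intros t Ht. apply HK; auto. apply Rabs_le.
      assert (Rmin (- tauhat f p x) 0 >= - Sb) by (apply Rmin_case; apply absle in Bx; lra).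
      assert (Rmax (- tauhat f p x) 0 <= Sb) by (apply Rmax_case; apply absle in Bx; lra). lra. }
    replace (0 - - tauhat f p x) with (tauhat f p x) in A by ring.
    assert (Rabs (tauhat f p x) * (K * (c * exp (alpha * Sb))) <= Sb * (K * (c * exp (alpha * Sb)))).
    { apply Rmult_le_compat_r; [|lra]. apply Rmult_le_pos; auto. apply Rmult_le_pos; auto. left; apply exp_pos. }
    pose proof (Hn2 x Hx). nra. }
  apply Rle_trans with (c * (1 + Sb * (K * exp (alpha * Sb))) * / m).
  - apply Rmult_le_compat; [apply Rabs_pos| left; apply Rinv_0_lt_compat; lra| auto|].
    apply Rinv_le_contravar; lra.
  - right. field. lra.
Qed.

Lemma kq_add (p h : prodX n) s x :
  kf f (fst (addP p h)) s x = f (fun y => phibar (fst p) s y + phibar (fst h) s y) x.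
Proof. unfold kf. rewrite !phibar_min. reflexivity. Qed.

Lemma normP_dist_add (p h : prodX n) c : normP_le Om alpha h c -> distP (addP p h) p c.
Proof.
  intros [A B]. split.
  - intros t y Ht Hy. simpl. replace (fst p t y + fst h t y - fst p t y) with (fst h t y) by ring. auto.
  - intros y Hy. simpl. replace (snd p y + snd h y - snd p y) with (snd h y) by ring. auto.
Qed.

Lemma frechet_tau (p : prodX n) : Dtau Om alpha f p -> forall eps, 0 < eps -> exists d, 0 < d /\
  forall h c, memP Om alpha h -> Dtau Om alpha f (addP p h) -> normP_le Om alpha h c -> c < d ->
  forall x, Om x -> Rabs (tauhat f (addP p h) x - tauhat f p x - DTm p h x) <= eps * c.
Proof.
  intros HD eps He. destruct (pack p HD) as [Sb [m [d0 [C [L [K1 [H1 [H2 [H3 [H4 [H5 [H6 [H7 H]]]]]]]]]]]]].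
  pose proof HD as [[HBp Hdp] _].
  destruct (H p 0 (proj1 HD) (distP_refl p) H3) as [_ [_ [Hkl [_ [Hp _]]]]].
  set (E := exp (alpha * Sb)).
  assert (HE : 0 < E) by apply exp_pos.
  set (e2 := eps * m / 4 / (K1 + 1)).
  assert (He2 : 0 < e2) by (unfold e2; apply Rdiv_lt_0_compat; [apply Rdiv_lt_0_compat; [apply Rmult_lt_0_compat|]|]; lra).
  destruct (kUC (fst p) HBp Sb e2 He2) as [dw [Hdw Hdw']].
  set (e3 := eps * m / (2 * (Sb + 1) * E)).
  assert (He3 : 0 < e3) by (unfold e3; apply Rdiv_lt_0_compat; [apply Rmult_lt_0_compat| apply Rmult_lt_0_compat]; lra).
  destruct (Dfr_unif _ (BUC_UC n Om alpha Ha _ HBp) (BUC_contC n Om alpha _ HBp) Sb e3 He3) as [dF [HdF HdF']].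
  set (d := Rmin (Rmin d0 (dw / (K1 + 1))) (Rmin (e2 / (L * E + 1)) (dF / E))).
  assert (Hd : 0 < d).
  { unfold d. assert (0 <= L * E) by (apply Rmult_le_pos; lra).
    repeat apply Rmin_glb_lt; auto; apply Rdiv_lt_0_compat; lra. }
  assert (Hdd0 : d <= d0) by (unfold d; eapply Rle_trans; [apply Rmin_l| apply Rmin_l]).
  assert (Hddw : d <= dw / (K1 + 1)) by (unfold d; eapply Rle_trans; [apply Rmin_l| apply Rmin_r]).
  assert (Hdd2 : d <= e2 / (L * E + 1)) by (unfold d; eapply Rle_trans; [apply Rmin_r| apply Rmin_l]).
  assert (HddF : d <= dF / E) by (unfold d; eapply Rle_trans; [apply Rmin_r| apply Rmin_r]).
  exists d; split; auto.
  intros h c Hh HDq Hn Hc x Hx.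
  set (q := addP p h).
  pose proof (normP_dist_add p h c Hn) as Hdist. fold q in Hdist.
  destruct (H q c (proj1 HDq) Hdist ltac:(lra)) as [_ [_ [Hklq [Hkd [Hq Htl]]]]].
  destruct Hh as [HBh Hdh]. pose proof (proj1 (proj1 HDq)) as HBq.
  destruct (normP_parts h c Hn) as [Hhb Hhd].
  assert (c0 : 0 <= c) by (pose proof (Hhd x Hx); pose proof (Rabs_pos (snd h x)); lra).
  destruct (Hq x Hx) as [Eq Bq]. destruct (Hp x Hx) as [Ep Bp].
  pose proof (Htl x Hx) as Lx.
  set (t := tauhat f p x) in *. set (t' := tauhat f q x) in *.
  set (a := kf f (fst p) (- t) x).
  assert (Ha' : m <= a) by (apply Hkl; auto; rewrite Rabs_Ropp; lra).
  set (kq := fun s => kf f (fst q) s x).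
  set (w := fun s => wD (fst p) (fst h) s x).
  set (Rm := fun s => kq s - kf f (fst p) s x - w s).
  assert (Iq : forall u v, ex_RInt kq u v) by (intros; apply kRI; auto).
  assert (Ip : forall u v, ex_RInt (fun s => kf f (fst p) s x) u v) by (intros; apply kRI; auto).
  assert (Iw : forall u v, ex_RInt w u v) by (intros; apply (UCs_RInt Om (wD (fst p) (fst h))); auto; apply wD_UC; auto).
  assert (IR : forall u v, ex_RInt Rm u v).
  { intros. unfold Rm. apply exRI_minus; [apply exRI_minus|]; auto. }
  set (E1 := (RInt (fun s => kq s - a) (- t') (- t) : R)).
  set (E2 := (RInt Rm (- t) 0 : R)).
  set (J := (RInt w (- t) 0 : R)).
  assert (Id1 : Phi (fst q) t' x - Phi (fst q) t x = E1 + (t' - t) * a).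
  { rewrite Phi_chasles by auto. unfold E1. rewrite RI_minus; auto; [|apply ex_RInt_const].
    assert (RC : RInt (fun _ : R => a) (- t') (- t) = (- t - - t') * a) by exact (RInt_const (V:=R_CompleteNormedModule) _ _ a).
    rewrite RC. unfold kq. lra. }
  assert (Id2 : Phi (fst q) t x - Phi (fst p) t x = J + E2).
  { unfold Phi, PhiW. rewrite <- RI_minus by auto. unfold J, E2.
    rewrite <- (Rmult_1_l (RInt w (- t) 0)), <- (Rmult_1_l (RInt Rm (- t) 0)).
    rewrite <- RI_lin by auto. apply RInt_ext. intros s _. unfold Rm, kq. lra. }
  assert (Hsq : snd q x = snd p x + snd h x) by reflexivity.
  assert (Key : t' - t - DTm p h x = - (E1 + E2) / a).
  { unfold DTm. fold t. fold a. fold w. fold J.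
    assert (snd h x = E1 + (t' - t) * a + J + E2).
    { assert (snd h x = Phi (fst q) t' x - Phi (fst p) t x) by lra. lra. }
    rewrite H0. field. lra. }
  rewrite Key.
  assert (BE1 : Rabs E1 <= Rabs (t' - t) * (L * (c * E) + e2)).
  { unfold E1. replace (Rabs (t' - t)) with (Rabs (- t - - t')) by (f_equal; ring).
    apply RI_abs. { apply exRI_minus; auto; apply ex_RInt_const. }
    intros s Hs.
    assert (Hsb : Rabs s <= Sb).
    { apply Rabs_le. apply absle in Bq. apply absle in Bp.
      assert (Rmin (- t') (- t) >= - Sb) by (apply Rmin_case; lra).
      assert (Rmax (- t') (- t) <= Sb) by (apply Rmax_case; lra). lra. }
    unfold kq. replace (kf f (fst q) s x - a) with ((kf f (fst q) s x - kf f (fst p) s x) + (kf f (fst p) s x - a)) by ring.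
    eapply Rle_trans; [apply Rabs_triang|].
    apply Rplus_le_compat.
    - eapply Rle_trans; [apply Hkd; auto|]. apply Rmult_le_compat_l; auto. apply Rmult_le_compat_l; auto.
      apply exp_le. apply Rmult_le_compat_l; auto.
    - unfold a. apply Hdw'; auto. { rewrite Rabs_Ropp; lra. }
      assert (Rabs (s - - t) <= Rabs (t' - t)).
      { apply Rabs_le. pose proof (Rle_abs (t' - t)). pose proof (Rle_abs (-(t' - t))). rewrite Rabs_Ropp in *.
        assert (Rmin (- t') (- t) >= - t - Rabs (t' - t)) by (apply Rmin_case; lra).
        assert (Rmax (- t') (- t) <= - t + Rabs (t' - t)) by (apply Rmax_case; lra). lra. }
      assert (K1 * c < dw).
      { apply Rle_lt_trans with ((K1 + 1) * c); [nra|].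
        apply (Rmult_lt_compat_l (K1 + 1)) in Hc; [|lra].
        apply Rlt_le_trans with ((K1 + 1) * d); [lra|].
        apply Rle_trans with ((K1 + 1) * (dw / (K1 + 1))); [apply Rmult_le_compat_l; lra| right; field; lra]. }
      lra. }
  assert (BE2 : Rabs E2 <= Sb * (e3 * (c * E))).
  { unfold E2. eapply Rle_trans; [apply (RI_abs _ _ _ (e3 * (c * E)))|].
    - auto.
    - intros s Hs.
      assert (Hsb : Rabs s <= Sb).
      { apply Rabs_le. apply absle in Bp.
        assert (Rmin (- t) 0 >= - Sb) by (apply Rmin_case; lra).
        assert (Rmax (- t) 0 <= Sb) by (apply Rmax_case; lra). lra. }
      unfold Rm, kq, w, wD, q. rewrite kq_add.
      apply (HdF' s Hsb (phibar (fst h) s) (c * E)); auto.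
      + apply (BUC_contC n Om alpha); auto.
      + intros y Hy. eapply Rle_trans; [apply Hhb; auto|]. apply Rmult_le_compat_l; auto.
        apply exp_le. apply Rmult_le_compat_l; auto.
      + apply Rle_trans with (d * E); [apply Rmult_le_compat_r; lra|].
        apply Rle_trans with (dF / E * E); [apply Rmult_le_compat_r; lra| right; field; lra].
    - replace (0 - - t) with t by ring. apply Rmult_le_compat_r; [|lra].
      apply Rmult_le_pos; [lra| apply Rmult_le_pos; lra]. }
  assert (LcE : L * (c * E) <= e2).
  { apply Rle_trans with ((L * E + 1) * c); [nra|].
    apply Rle_trans with ((L * E + 1) * (e2 / (L * E + 1))).
    - apply Rmult_le_compat_l; [assert (0 <= L * E) by (apply Rmult_le_pos; lra); lra| lra].
    - right; field. assert (0 <= L * E) by (apply Rmult_le_pos; lra); lra. }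
  assert (A1 : Rabs E1 <= c * (eps * m / 2)).
  { eapply Rle_trans; [apply BE1|].
    apply Rle_trans with (K1 * c * (2 * e2)).
    - apply Rmult_le_compat; [apply Rabs_pos| assert (0 <= L * (c * E)) by (apply Rmult_le_pos; [lra| apply Rmult_le_pos; lra]); lra | auto| lra].
    - unfold e2. replace (K1 * c * (2 * (eps * m / 4 / (K1 + 1)))) with (c * (eps * m / 2) * (K1 / (K1 + 1))) by (field; lra).
      assert (0 <= c * (eps * m / 2)) by (assert (0 < eps * m) by (apply Rmult_lt_0_compat; lra); apply Rmult_le_pos; lra).
      assert (K1 / (K1 + 1) <= 1) by (apply (Rmult_le_reg_r (K1 + 1)); [lra|]; field_simplify; lra).
      nra. }
  assert (A2 : Rabs E2 <= c * (eps * m / 2)).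
  { eapply Rle_trans; [apply BE2|]. unfold e3.
    replace (Sb * (eps * m / (2 * (Sb + 1) * E) * (c * E))) with (c * (eps * m / 2) * (Sb / (Sb + 1))) by (field; lra).
    assert (0 <= c * (eps * m / 2)) by (assert (0 < eps * m) by (apply Rmult_lt_0_compat; lra); apply Rmult_le_pos; lra).
    assert (Sb / (Sb + 1) <= 1) by (apply (Rmult_le_reg_r (Sb + 1)); [lra|]; field_simplify; lra).
    nra. }
  unfold Rdiv. rewrite Rabs_mult, Rabs_Ropp, Rabs_inv, (Rabs_right a) by lra.
  apply Rle_trans with ((Rabs E1 + Rabs E2) * / m).
  - apply Rmult_le_compat; [apply Rabs_pos| left; apply Rinv_0_lt_compat; lra| apply Rabs_triang| apply Rinv_le_contravar; lra].
  - apply Rle_trans with (c * (eps * m) * / m).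
    + apply Rmult_le_compat_r; [left; apply Rinv_0_lt_compat; lra| lra].
    + right; field; lra.
Qed.

Lemma normP_dist_sub (q p : prodX n) c : normP_le Om alpha (addP q (scalP (-1) p)) c -> distP q p c.
Proof.
  intros [A B]. split.
  - intros t y Ht Hy. specialize (A t y Ht Hy). simpl in A. replace (fst q t y + -1 * fst p t y) with (fst q t y - fst p t y) in A by ring. auto.
  - intros y Hy. specialize (B y Hy). simpl in B. replace (snd q y + -1 * snd p y) with (snd q y - snd p y) in B by ring. auto.
Qed.

Lemma DT_opcont (p : prodX n) : Dtau Om alpha f p -> forall eps, 0 < eps -> exists d, 0 < d /\
  forall q c', Dtau Om alpha f q -> distP q p c' -> c' < d ->
  forall h ch, memP Om alpha h -> normP_le Om alpha h ch ->
  forall x, Om x -> Rabs (DTm q h x - DTm p h x) <= eps * ch.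
Proof.
  intros HD eps He. destruct (pack p HD) as [Sb [m [d0 [C [L [K1 [H1 [H2 [H3 [H4 [H5 [H6 [H7 H]]]]]]]]]]]]].
  pose proof HD as [[HBp Hdp] _].
  destruct (H p 0 (proj1 HD) (distP_refl p) H3) as [_ [_ [Hkl [_ [Hp _]]]]].
  destruct (wD_bound (fst p) HBp Sb) as [Kp [HKp0 HKp]].
  set (E := exp (alpha * Sb)).
  assert (HE : 0 < E) by apply exp_pos.
  set (NB := 1 + Sb * (Kp + 1) * E).
  assert (HNB : 1 <= NB) by (unfold NB; assert (0 <= Sb * (Kp + 1) * E) by (apply Rmult_le_pos; [apply Rmult_le_pos|]; lra); lra).
  assert (Hmm : 0 < m * m) by (apply Rmult_lt_0_compat; lra).
  set (eo := eps * (m * m) / (4 * NB)).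
  assert (Heo : 0 < eo) by (unfold eo; apply Rdiv_lt_0_compat; [apply Rmult_lt_0_compat|]; lra).
  set (eu := Rmin 1 (eps * m / (4 * (Sb + 1) * E))).
  assert (Heu : 0 < eu).
  { unfold eu. apply Rmin_glb_lt; [lra|]. apply Rdiv_lt_0_compat; [apply Rmult_lt_0_compat; lra|].
    apply Rmult_lt_0_compat; lra. }
  destruct (kUC (fst p) HBp Sb eo Heo) as [dw [Hdw Hdw']].
  destruct (Dunif _ (BUC_UC n Om alpha Ha _ HBp) (BUC_contC n Om alpha _ HBp) Sb eu Heu) as [du [Hdu Hdu']].
  assert (HLE : 0 <= L * E) by (apply Rmult_le_pos; lra).
  assert (HKKE : 0 <= K1 * Kp * E) by (apply Rmult_le_pos; [apply Rmult_le_pos|]; lra).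
  set (d := Rmin (Rmin d0 (dw / (K1 + 1))) (Rmin (Rmin (eo / (L * E + 1)) (eps * m / (4 * (K1 * Kp * E + 1)))) (du / E))).
  assert (Hd : 0 < d).
  { unfold d. repeat apply Rmin_glb_lt; auto; apply Rdiv_lt_0_compat; try lra.
    apply Rmult_lt_0_compat; lra. }
  assert (Hdd0 : d <= d0) by (unfold d; eapply Rle_trans; [apply Rmin_l| apply Rmin_l]).
  assert (Hddw : d <= dw / (K1 + 1)) by (unfold d; eapply Rle_trans; [apply Rmin_l| apply Rmin_r]).
  assert (Hddo : d <= eo / (L * E + 1)) by (unfold d; eapply Rle_trans; [apply Rmin_r|]; eapply Rle_trans; [apply Rmin_l| apply Rmin_l]).
  assert (HddK : d <= eps * m / (4 * (K1 * Kp * E + 1))) by (unfold d; eapply Rle_trans; [apply Rmin_r|]; eapply Rle_trans; [apply Rmin_l| apply Rmin_r]).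
  assert (Hddu : d <= du / E) by (unfold d; eapply Rle_trans; [apply Rmin_r| apply Rmin_r]).
  exists d; split; auto.
  intros q c' HDq Hdist Hc' h ch [HBh Hdh] Hn x Hx.
  destruct (H q c' (proj1 HDq) Hdist ltac:(lra)) as [_ [_ [Hklq [Hkd [Hq Htl]]]]].
  pose proof (proj1 (proj1 HDq)) as HBq.
  destruct (normP_parts h ch Hn) as [Hhb Hhd].
  assert (ch0 : 0 <= ch) by (pose proof (Hhd x Hx); pose proof (Rabs_pos (snd h x)); lra).
  assert (c0 : 0 <= c') by (pose proof (proj2 Hdist x Hx); pose proof (Rabs_pos (snd q x - snd p x)); lra).
  destruct (Hq x Hx) as [_ Bq]. destruct (Hp x Hx) as [_ Bp].
  pose proof (Htl x Hx) as Lx.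
  set (tp := tauhat f p x) in *. set (tq := tauhat f q x) in *.
  set (ap := kf f (fst p) (- tp) x). set (aq := kf f (fst q) (- tq) x).
  assert (Hap : m <= ap) by (apply Hkl; auto; rewrite Rabs_Ropp; lra).
  assert (Haq : m <= aq) by (apply Hklq; auto; rewrite Rabs_Ropp; lra).
  set (wp := fun s => wD (fst p) (fst h) s x).
  set (wq := fun s => wD (fst q) (fst h) s x).
  assert (Iwp : forall u v, ex_RInt wp u v) by (intros; apply (UCs_RInt Om (wD (fst p) (fst h))); auto; apply wD_UC; auto).
  assert (Iwq : forall u v, ex_RInt wq u v) by (intros; apply (UCs_RInt Om (wD (fst q) (fst h))); auto; apply wD_UC; auto).
  set (Jp := (RInt wp (- tp) 0 : R)). set (Jq := (RInt wq (- tq) 0 : R)).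
  assert (W2 : forall s, Rabs s <= Sb -> Rabs (wp s) <= Kp * (ch * E)).
  { intros s Hs. unfold wp. apply (HKp (fst h) ch HBh (proj1 Hn) s x Hs Hx). }
  assert (W1 : forall s, Rabs s <= Sb -> Rabs (wq s - wp s) <= eu * (ch * E)).
  { intros s Hs. unfold wq, wp, wD. apply (Hdu' s Hs); auto.
    - apply (BUC_contC n Om alpha); auto.
    - intros y Hy. eapply Rle_trans; [apply (distP_curve q p c' Hdist s y Hy)|].
      apply Rle_trans with (c' * E); [apply Rmult_le_compat_l; auto; apply exp_le; apply Rmult_le_compat_l; auto|].
      apply Rle_trans with (d * E); [apply Rmult_le_compat_r; lra|].
      apply Rle_trans with (du / E * E); [apply Rmult_le_compat_r; lra| right; field; lra].
    - apply (BUC_contC n Om alpha); auto.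
    - intros y Hy. eapply Rle_trans; [apply Hhb; auto|]. apply Rmult_le_compat_l; auto.
      apply exp_le. apply Rmult_le_compat_l; auto. }
  assert (Heu1 : eu <= 1) by apply Rmin_l.
  assert (Heu2 : eu <= eps * m / (4 * (Sb + 1) * E)) by apply Rmin_r.
  assert (BJq : Rabs Jq <= Sb * ((Kp + 1) * (ch * E))).
  { unfold Jq. eapply Rle_trans; [apply (RI_abs _ _ _ ((Kp + 1) * (ch * E)))|].
    - auto.
    - intros s Hs. assert (Hsb : Rabs s <= Sb).
      { apply Rabs_le. apply absle in Bq. assert (Rmin (- tq) 0 >= - Sb) by (apply Rmin_case; lra).
        assert (Rmax (- tq) 0 <= Sb) by (apply Rmax_case; lra). lra. }
      replace (wq s) with (wp s + (wq s - wp s)) by ring. eapply Rle_trans; [apply Rabs_triang|].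
      pose proof (W1 s Hsb). pose proof (W2 s Hsb).
      assert (eu * (ch * E) <= 1 * (ch * E)) by (apply Rmult_le_compat_r; [apply Rmult_le_pos|]; lra). lra.
    - replace (0 - - tq) with tq by ring. apply Rmult_le_compat_r; [|lra].
      apply Rmult_le_pos; [lra| apply Rmult_le_pos; lra]. }
  assert (BA : Rabs (snd h x - Jq) <= ch * NB).
  { unfold Rminus. eapply Rle_trans; [apply Rabs_triang|]. rewrite Rabs_Ropp. pose proof (Hhd x Hx).
    unfold NB. replace (ch * (1 + Sb * (Kp + 1) * E)) with (ch + Sb * ((Kp + 1) * (ch * E))) by ring. lra. }
  assert (Bapq : Rabs (ap - aq) <= 2 * eo).
  { unfold ap, aq. replace (kf f (fst p) (- tp) x - kf f (fst q) (- tq) x) with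
      ((kf f (fst p) (- tp) x - kf f (fst p) (- tq) x) - (kf f (fst q) (- tq) x - kf f (fst p) (- tq) x)) by ring.
    unfold Rminus at 1. eapply Rle_trans; [apply Rabs_triang|]. rewrite Rabs_Ropp.
    assert (A1 : Rabs (kf f (fst p) (- tp) x - kf f (fst p) (- tq) x) <= eo).
    { apply Hdw'; auto; try (rewrite Rabs_Ropp; lra).
      replace (- tp - - tq) with (tq - tp) by ring.
      assert (K1 * c' < dw).
      { apply Rle_lt_trans with ((K1 + 1) * c'); [nra|].
        apply Rlt_le_trans with ((K1 + 1) * d); [apply Rmult_lt_compat_l; lra|].
        apply Rle_trans with ((K1 + 1) * (dw / (K1 + 1))); [apply Rmult_le_compat_l; lra| right; field; lra]. }
      lra. }
    assert (A2 : Rabs (kf f (fst q) (- tq) x - kf f (fst p) (- tq) x) <= eo).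
    { eapply Rle_trans; [apply Hkd; auto|].
      apply Rle_trans with (L * (c' * E)).
      { apply Rmult_le_compat_l; auto. apply Rmult_le_compat_l; auto. apply exp_le. apply Rmult_le_compat_l; auto.
        rewrite Rabs_Ropp; lra. }
      apply Rle_trans with ((L * E + 1) * c'); [nra|].
      apply Rle_trans with ((L * E + 1) * (eo / (L * E + 1))); [apply Rmult_le_compat_l; lra| right; field; lra]. }
    lra. }
  assert (BJ : Rabs (Jp - Jq) <= Rabs (tq - tp) * (Kp * (ch * E)) + Sb * (eu * (ch * E))).
  { assert (EJ : Jp - Jq = RInt wp (- tp) (- tq) - RInt (fun s => wq s - wp s) (- tq) 0).
    { unfold Jp, Jq. rewrite <- (RI_chasles wp (- tp) (- tq) 0) by auto. rewrite RI_minus by auto. lra. }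
    rewrite EJ. unfold Rminus at 1. eapply Rle_trans; [apply Rabs_triang|]. rewrite Rabs_Ropp.
    apply Rplus_le_compat.
    - replace (Rabs (tq - tp)) with (Rabs (- tq - - tp)) by (rewrite <- Rabs_Ropp; f_equal; ring).
      apply RI_abs; auto. intros s Hs. apply W2. apply Rabs_le. apply absle in Bq. apply absle in Bp.
      assert (Rmin (- tp) (- tq) >= - Sb) by (apply Rmin_case; lra).
      assert (Rmax (- tp) (- tq) <= Sb) by (apply Rmax_case; lra). lra.
    - eapply Rle_trans; [apply (RI_abs _ _ _ (eu * (ch * E)))|].
      + apply exRI_minus; auto.
      + intros s Hs. apply W1. apply Rabs_le. apply absle in Bq.
        assert (Rmin (- tq) 0 >= - Sb) by (apply Rmin_case; lra).
        assert (Rmax (- tq) 0 <= Sb) by (apply Rmax_case; lra). lra.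
      + replace (0 - - tq) with tq by ring. apply Rmult_le_compat_r; [|lra].
        apply Rmult_le_pos; [lra| apply Rmult_le_pos; lra]. }
  assert (Id : DTm q h x - DTm p h x = (snd h x - Jq) * (ap - aq) / (aq * ap) + (Jp - Jq) / ap).
  { unfold DTm. fold tp tq ap aq wp wq. fold Jp Jq. field. split; lra. }
  rewrite Id. eapply Rle_trans; [apply Rabs_triang|].
  assert (T1 : Rabs ((snd h x - Jq) * (ap - aq) / (aq * ap)) <= eps * ch / 2).
  { unfold Rdiv. rewrite !Rabs_mult, Rabs_inv, Rabs_mult, (Rabs_right aq), (Rabs_right ap) by lra.
    apply Rle_trans with ((ch * NB) * (2 * eo) * / (m * m)).
    - apply Rmult_le_compat; [apply Rmult_le_pos; apply Rabs_pos| left; apply Rinv_0_lt_compat; apply Rmult_lt_0_compat; lra| |].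
      + apply Rmult_le_compat; auto; apply Rabs_pos.
      + apply Rinv_le_contravar; auto. apply Rmult_le_compat; lra.
    - unfold eo. right. field. split; lra. }
  assert (T2 : Rabs ((Jp - Jq) / ap) <= eps * ch / 2).
  { unfold Rdiv. rewrite Rabs_mult, Rabs_inv, (Rabs_right ap) by lra.
    assert (Bn : Rabs (Jp - Jq) <= ch * (eps * m / 2)).
    { eapply Rle_trans; [apply BJ|].
      assert (X1 : Rabs (tq - tp) * (Kp * (ch * E)) <= ch * (eps * m / 4)).
      { apply Rle_trans with (K1 * c' * (Kp * (ch * E))).
        { apply Rmult_le_compat_r; auto. apply Rmult_le_pos; auto. apply Rmult_le_pos; lra. }
        replace (K1 * c' * (Kp * (ch * E))) with (ch * (K1 * Kp * E * c')) by ring.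
        apply Rmult_le_compat_l; auto.
        apply Rle_trans with ((K1 * Kp * E + 1) * c'); [nra|].
        apply Rle_trans with ((K1 * Kp * E + 1) * (eps * m / (4 * (K1 * Kp * E + 1)))); [apply Rmult_le_compat_l; lra| right; field; lra]. }
      assert (X2 : Sb * (eu * (ch * E)) <= ch * (eps * m / 4)).
      { apply Rle_trans with (Sb * ((eps * m / (4 * (Sb + 1) * E)) * (ch * E))).
        { apply Rmult_le_compat_l; [lra|]. apply Rmult_le_compat_r; [apply Rmult_le_pos|]; lra. }
        replace (Sb * (eps * m / (4 * (Sb + 1) * E) * (ch * E))) with (ch * (eps * m / 4) * (Sb / (Sb + 1))) by (field; lra).
        assert (0 <= ch * (eps * m / 4)) by (assert (0 < eps * m) by (apply Rmult_lt_0_compat; lra); apply Rmult_le_pos; lra).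
        assert (Sb / (Sb + 1) <= 1) by (apply (Rmult_le_reg_r (Sb + 1)); [lra|]; field_simplify; lra).
        nra. }
      lra. }
    apply Rle_trans with (ch * (eps * m / 2) * / m).
    - apply Rmult_le_compat; [apply Rabs_pos| left; apply Rinv_0_lt_compat; lra| auto| apply Rinv_le_contravar; lra].
    - right. field. lra. }
  lra.
Qed.

Lemma main_conj :
  (forall p, Dtau Om alpha f p -> exists r, 0 < r /\
     forall q, memP Om alpha q ->
       (exists c, c < r /\ normP_le Om alpha (addP q (scalP (-1) p)) c) ->
       Dtau Om alpha f q) /\
  (exists DT, C1_map Om (memP Om alpha) (normP_le Om alpha) addP scalP
                (Dtau Om alpha f) (tauhat f) DT).
Proof.
  split.
  - intros p HD. destruct (pack p HD) as [Sb [m [d0 [C [L [K1 [H1 [H2 [H3 [H4 [H5 [H6 [H7 H]]]]]]]]]]]]].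
    exists d0. split; auto. intros q Hq [c [Hc Hn]].
    apply normP_dist_sub in Hn. destruct (H q c Hq Hn Hc) as [Dq _]. exact Dq.
  - exists DTm. unfold C1_map. refine (conj _ (conj _ (conj _ (conj _ (conj _ _))))).
    + intros p HD. apply tau_cont; auto.
    + intros p HD h Hh. apply DT_cont; auto.
    + intros p HD h1 h2 a b H1 H2 x Hx. apply DT_lin; auto.
    + intros p HD. destruct (DT_bd p HD) as [K HK]. exists K. intros h c Hh Hn x Hx. apply HK; auto.
    + intros p HD eps He. destruct (frechet_tau p HD eps He) as [d [Hd Hd']].
      exists d; split; [auto|]. intros h c Hh HDq Hn Hc x Hx. apply Hd'; auto.
    + intros p HD eps He. destruct (DT_opcont p HD eps He) as [d [Hd Hd']].
      exists d; split; auto. intros q HDq [c' [Hc' Hn']] h c Hh Hn x Hx.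
      apply (Hd' q c'); auto. apply normP_dist_sub; auto.
Qed.

End PhiSec.

Theorem lemma3p5 (n : nat) (Om : pt n -> Prop) (alpha Mf : R)
  (f : (pt n -> R) -> (pt n -> R)) :
  compact_set Om ->
  0 <= alpha ->
  (forall g, contC Om g -> contC Om (f g)) ->
  lipschitzC Om f ->
  (forall g x, contC Om g -> Om x -> 0 < f g x <= Mf) ->
  (forall g h, contC Om g -> contC Om h -> (forall x, Om x -> g x <= h x) ->
     forall x, Om x -> f h x <= f g x) ->
  (exists Df, C1_map Om (contC Om) (supC_le Om) addF scalF (contC Om) f Df) ->
  (* D(tauhat) is open in BUC_alpha x C(Omega) *)
  (forall p, Dtau Om alpha f p -> exists r, 0 < r /\
     forall q, memP Om alpha q ->
       (exists c, c < r /\ normP_le Om alpha (addP q (scalP (-1) p)) c) ->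
       Dtau Om alpha f q) /\
  (* tauhat : D(tauhat) -> C(Omega) is continuously differentiable *)
  (exists DT, C1_map Om (memP Om alpha) (normP_le Om alpha) addP scalP
                (Dtau Om alpha f) (tauhat f) DT).
Proof.
  intros HC Ha Hfc Hlip Hpos Hmono [Df HDf].
  eapply main_conj; eauto.
Qed.
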